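(* Let $S$ be an inverse semigroup with zero. Then $S$ is a weak semilattice if and only if its Booleanization $\mathsf{B}(S)$ is a $\wedge$-semigroup.
   Context: Inverse semigroups carry the natural partial order; $x^{\downarrow}=\{s: s\le x\}$. $S$ is a weak semilattice if for all $a,b\in S$ the set $a^{\downarrow}\cap b^{\downarrow}$ equals $F^{\downarrow}=\{s : s\le f \text{ for some } f\in F\}$ for some finite $F\subseteq S$. A $\wedge$-semigroup is an inverse semigroup in which every two elements have a meet. Elements $s,t$ are compatible if $s^{-1}t,st^{-1}$ are idempotents. A Boolean algebra means a distributive lattice with bottom in which each principal order ideal is a unital Boolean algebra. A Boolean inverse semigroup is an inverse semigroup with zero having joins of all compatible pairs, with multiplication distributing over them, whose idempotents form a Boolean algebra. Homomorphisms preserve zero; morphisms are homomorphisms preserving joins of compatible pairs. The Booleanization of $S$ is the Boolean inverse semigroup $\mathsf{B}(S)$ with an injective homomorphism $\beta\colon S\to\mathsf{B}(S)$ such that every homomorphism $\theta$ from $S$ to a Boolean inverse semigroup $T$ factors as $\theta=\gamma\circ\beta$ for a unique morphism $\gamma\colon \mathsf{B}(S)\to T$ (unique up to isomorphism). *)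

(* Defs.v *)
From Stdlib Require Import List.
Import ListNotations.

Record InvSemigroup0 : Type := {
  carrier :> Type;
  mul : carrier -> carrier -> carrier;
  inv : carrier -> carrier;
  zero : carrier;
  mulA : forall a b c, mul a (mul b c) = mul (mul a b) c;
  inv_l : forall a, mul (mul a (inv a)) a = a;
  inv_r : forall a, mul (mul (inv a) a) (inv a) = inv a;
  inv_uniq : forall a b, mul (mul a b) a = a -> mul (mul b a) b = b -> b = inv a;
  zero_l : forall a, mul zero a = zero;
  zero_r : forall a, mul a zero = zero
}.

Arguments mul {_} _ _.
Arguments inv {_} _.
Arguments zero {_}.

Section Defs.
Variable S : InvSemigroup0.

Definition idempotent (e : S) : Prop := mul e e = e.

Definition nat_le (s t : S) : Prop := exists e : S, idempotent e /\ s = mul t e.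

Definition weak_semilattice : Prop :=
  forall a b : S, exists F : list S,
    forall s : S, (nat_le s a /\ nat_le s b) <-> (exists f, In f F /\ nat_le s f).

Definition is_lub_in (P : S -> Prop) (x y j : S) : Prop :=
  P j /\ nat_le x j /\ nat_le y j /\
  forall k, P k -> nat_le x k -> nat_le y k -> nat_le j k.

Definition is_glb_in (P : S -> Prop) (x y m : S) : Prop :=
  P m /\ nat_le m x /\ nat_le m y /\
  forall k, P k -> nat_le k x -> nat_le k y -> nat_le k m.

Definition anyS : S -> Prop := fun _ => True.

Definition wedge_semigroup : Prop :=
  forall a b : S, exists m, is_glb_in anyS a b m.

Definition compatible (s t : S) : Prop :=
  idempotent (mul (inv s) t) /\ idempotent (mul s (inv t)).

(** The idempotents form a Boolean algebra in the sense of the paper: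
    a distributive lattice with bottom in which every principal order ideal
    is a unital Boolean algebra. *)
Definition idempotents_boolean : Prop :=
  (forall e f, idempotent e -> idempotent f -> exists j, is_lub_in idempotent e f j) /\
  (forall e f, idempotent e -> idempotent f -> exists m, is_glb_in idempotent e f m) /\
  (idempotent zero /\ forall e, idempotent e -> nat_le zero e) /\
  (forall e f g j m1 m2 x,
      idempotent e -> idempotent f -> idempotent g ->
      is_lub_in idempotent f g j ->
      is_glb_in idempotent e f m1 -> is_glb_in idempotent e g m2 ->
      is_glb_in idempotent e j x ->
      is_lub_in idempotent m1 m2 x) /\
  (* each principal ideal [0, e] is complemented (hence a unital Boolean algebra) *)
  (forall e f, idempotent e -> idempotent f -> nat_le f e ->
      exists g, idempotent g /\ nat_le g e /\
        is_glb_in idempotent f g zero /\ is_lub_in idempotent f g e).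

Definition boolean_inverse_semigroup : Prop :=
  (forall a b, compatible a b -> exists j, is_lub_in anyS a b j) /\
  (forall a b j s, compatible a b -> is_lub_in anyS a b j ->
      is_lub_in anyS (mul s a) (mul s b) (mul s j) /\
      is_lub_in anyS (mul a s) (mul b s) (mul j s)) /\
  idempotents_boolean.

End Defs.

Arguments nat_le {_} _ _.
Arguments compatible {_} _ _.
Arguments is_lub_in {_} _ _ _ _.
Arguments anyS {_} _.

Definition homomorphism (S T : InvSemigroup0) (f : S -> T) : Prop :=
  (forall a b, f (mul a b) = mul (f a) (f b)) /\ f zero = zero.

Definition morphism (S T : InvSemigroup0) (f : S -> T) : Prop :=
  homomorphism S T f /\
  forall a b j, compatible a b -> is_lub_in anyS a b j ->
    is_lub_in anyS (f a) (f b) (f j).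

Definition is_booleanization (S B : InvSemigroup0) (beta : S -> B) : Prop :=
  boolean_inverse_semigroup B /\
  homomorphism S B beta /\
  (forall x y, beta x = beta y -> x = y) /\
  forall (T : InvSemigroup0) (theta : S -> T),
    boolean_inverse_semigroup T -> homomorphism S T theta ->
    (exists gamma : B -> T, morphism B T gamma /\ forall x, theta x = gamma (beta x)) /\
    (forall g1 g2 : B -> T, morphism B T g1 -> morphism B T g2 ->
       (forall x, theta x = g1 (beta x)) -> (forall x, theta x = g2 (beta x)) ->
       forall y, g1 y = g2 y).

(* Main.v *)
Require Import Defs.
From Stdlib Require Import List Classical ClassicalEpsilon FunctionalExtensionality PropExtensionality ProofIrrelevance.
Import ListNotations.


Arguments mulA {_} _ _ _.
Arguments inv_l {_} _.
Arguments inv_r {_} _.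
Arguments inv_uniq {_} _ _ _ _.
Arguments zero_l {_} _.
Arguments zero_r {_} _.
Arguments idempotent {_} _.

Section ISBasics.
Variable S : InvSemigroup0.
Local Notation "x ** y" := (@mul S x y) (at level 40, left associativity).
Local Notation "x ^-" := (@inv S x) (at level 2).

Ltac ra := repeat rewrite <- mulA.

Lemma inv_inv (a : S) : a ^- ^- = a.
Proof. symmetry. apply inv_uniq. apply inv_r. apply inv_l. Qed.

Lemma idem_inv (e : S) : idempotent e -> e ^- = e.
Proof. unfold idempotent; intro H. symmetry. apply inv_uniq; rewrite !H; auto. Qed.

Lemma inv_r' (a : S) : a ^- ** (a ** a ^-) = a ^-.
Proof. rewrite mulA. apply inv_r. Qed.
Lemma inv_l' (a : S) : a ** (a ^- ** a) = a.
Proof. rewrite mulA. apply inv_l. Qed.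
Lemma inv_r'' (a z : S) : a ^- ** (a ** (a ^- ** z)) = a ^- ** z.
Proof. rewrite (mulA a), (mulA (a ^-)), inv_r'. auto. Qed.
Lemma inv_l'' (a z : S) : a ** (a ^- ** (a ** z)) = a ** z.
Proof. rewrite (mulA (a ^-)), (mulA a), inv_l'. auto. Qed.

Lemma idem2 (e z : S) : idempotent e -> e ** (e ** z) = e ** z.
Proof. intro H. rewrite mulA, H. auto. Qed.

Lemma idem_rr (a : S) : idempotent (a ** a ^-).
Proof. unfold idempotent. rewrite mulA, inv_l. auto. Qed.
Lemma idem_ll (a : S) : idempotent (a ^- ** a).
Proof. unfold idempotent. rewrite mulA, inv_r. auto. Qed.

Lemma idem_prod_idem (e f : S) : idempotent e -> idempotent f -> idempotent (e ** f).
Proof.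
  unfold idempotent; intros He Hf.
  set (x := (e ** f) ^-).
  assert (Hy : f ** (x ** e) = x).
  { unfold x. apply inv_uniq.
    - ra. rewrite (idem2 f); auto. rewrite (idem2 e); auto.
      rewrite (mulA e f). rewrite (mulA (e ** f)). apply inv_l.
    - ra. rewrite (idem2 e); auto. rewrite (idem2 f); auto.
      rewrite (mulA e f). rewrite (mulA _ (e ** f)). rewrite (mulA _ _ e). rewrite inv_r. auto. }
  assert (Hx : x ** x = x).
  { transitivity ((f ** (x ** e)) ** (f ** (x ** e))). rewrite Hy; auto.
    ra. rewrite (mulA e f). rewrite (mulA x (e ** f)). rewrite (mulA _ x e). unfold x. rewrite inv_r.
    fold x. auto. }
  assert (x ^- = e ** f) by (unfold x; apply inv_inv).
  rewrite <- H. rewrite idem_inv; auto.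
Qed.

Lemma idem_commute (e f : S) : idempotent e -> idempotent f -> e ** f = f ** e.
Proof.
  intros He Hf. pose proof (idem_prod_idem e f He Hf) as Hef.
  pose proof (idem_prod_idem f e Hf He) as Hfe. unfold idempotent in *.
  assert (f ** e = (e ** f) ^-).
  { apply inv_uniq.
    - ra. rewrite (idem2 f _ Hf). rewrite (idem2 e _ He). rewrite (mulA e f). exact Hef.
    - ra. rewrite (idem2 e _ He). rewrite (idem2 f _ Hf). rewrite (mulA f e). exact Hfe. }
  rewrite H. rewrite idem_inv; auto.
Qed.

Lemma idem_comm_r (e f z : S) : idempotent e -> idempotent f -> e ** (f ** z) = f ** (e ** z).
Proof. intros He Hf. rewrite !mulA. rewrite (idem_commute e f); auto. Qed.

Lemma swap2 (p q r t z : S) : idempotent (p ** q) -> idempotent (r ** t) ->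
  p ** (q ** (r ** (t ** z))) = r ** (t ** (p ** (q ** z))).
Proof. intros H1 H2. rewrite (mulA r t), (mulA p q), (mulA r t), (mulA p q). apply idem_comm_r; auto. Qed.

Lemma swap1 (p r t z : S) : idempotent p -> idempotent (r ** t) ->
  p ** (r ** (t ** z)) = r ** (t ** (p ** z)).
Proof. intros H1 H2. rewrite (mulA r t), (mulA r t). apply idem_comm_r; auto. Qed.

Lemma inv_mul (a b : S) : (a ** b) ^- = b ^- ** a ^-.
Proof.
  symmetry. apply inv_uniq.
  - ra. rewrite (swap2 b (b ^-) (a ^-) a); [|apply idem_rr|apply idem_ll].
    rewrite inv_l''. rewrite inv_l'. auto.
  - ra. rewrite (swap2 (a ^-) a b (b ^-)); [|apply idem_ll|apply idem_rr].
    rewrite inv_r''. rewrite inv_r'. auto.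
Qed.

Lemma idem_zero : idempotent (@zero S).
Proof. unfold idempotent. apply zero_l. Qed.

Lemma inv_zero : (@zero S) ^- = zero.
Proof. apply idem_inv, idem_zero. Qed.

Lemma idem_conj (a e : S) : idempotent e -> idempotent (a ** e ** a ^-).
Proof.
  intro He. unfold idempotent. ra. rewrite (swap1 e (a ^-) a); [|auto|apply idem_ll].
  rewrite inv_l''. rewrite (idem2 e _ He). auto.
Qed.

Lemma idem_conj' (a e : S) : idempotent e -> idempotent (a ^- ** e ** a).
Proof. intro He. pose proof (idem_conj (a ^-) e He). rewrite inv_inv in H. auto. Qed.

Lemma idem_iff_inv (x : S) : idempotent x <-> x = x ^- ** x.
Proof.
  split; intro H.
  - rewrite idem_inv; auto.
  - rewrite H. apply idem_ll.
Qed.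

Lemma nat_le_char (s t : S) : nat_le s t <-> s = t ** (s ^- ** s).
Proof.
  split.
  - intros [e [He Hs]]. subst s. rewrite inv_mul. rewrite (idem_inv e He). ra.
    rewrite (swap1 e (t ^-) t); [|auto|apply idem_ll]. rewrite inv_l''. unfold idempotent in He; rewrite He. auto.
  - intro H. exists (s ^- ** s). split; auto. apply idem_ll.
Qed.

Lemma aux_le_l (t e : S) : idempotent e -> (t ** e) ** (t ** e) ^- ** t = t ** e.
Proof.
  intro He. rewrite inv_mul, (idem_inv e He). ra. rewrite (idem2 e _ He).
  rewrite (idem_commute e (t ^- ** t)); [|auto|apply idem_ll]. ra. rewrite inv_l''. auto.
Qed.

Lemma aux_le_r (t e : S) : idempotent e -> t ** (e ** t) ^- ** (e ** t) = e ** t.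
Proof.
  intro He. rewrite inv_mul, (idem_inv e He). ra. rewrite (idem2 e _ He).
  rewrite (mulA t (t ^-)), (mulA (t ** t ^-) e), (idem_commute (t ** t ^-) e); [|apply idem_rr|auto].
  ra. rewrite inv_l'. auto.
Qed.

Lemma nat_le_char_l (s t : S) : nat_le s t <-> s = (s ** s ^-) ** t.
Proof.
  split; intro H.
  - apply nat_le_char in H. set (e := s ^- ** s) in H.
    assert (He : idempotent e) by apply idem_ll.
    rewrite H at 1. rewrite <- (aux_le_l t e He). rewrite <- H. auto.
  - apply nat_le_char. set (e := s ** s ^-) in H.
    assert (He : idempotent e) by apply idem_rr.
    rewrite H at 1. rewrite <- (aux_le_r t e He) at 1. rewrite <- H. apply eq_sym, mulA.
Qed.

Lemma nat_le_intro_l (s t f : S) : idempotent f -> s = f ** t -> nat_le s t.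
Proof.
  intros Hf H. apply nat_le_char_l. subst s. symmetry. rewrite inv_mul, (idem_inv f Hf). ra.
  rewrite (mulA t (t ^-) (f ** t)), (mulA (t ** t ^-) f t).
  rewrite (idem_commute (t ** t ^-) f); [|apply idem_rr|auto]. ra. rewrite (idem2 f _ Hf), inv_l'. auto.
Qed.

Lemma nat_le_refl (s : S) : nat_le s s.
Proof. apply nat_le_char. symmetry. apply inv_l'. Qed.

Lemma nat_le_trans (r s t : S) : nat_le r s -> nat_le s t -> nat_le r t.
Proof.
  intros [e [He H1]] [f [Hf H2]]. exists (f ** e). split.
  - apply idem_prod_idem; auto.
  - subst. ra. auto.
Qed.

Lemma nat_le_idem (s e : S) : idempotent e -> nat_le s e -> idempotent s.
Proof. intros He [f [Hf H]]. subst. apply idem_prod_idem; auto. Qed.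

Lemma nat_le_idem_char (e f : S) : idempotent f -> (nat_le e f <-> idempotent e /\ e = e ** f).
Proof.
  intros Hf. split.
  - intros H. pose proof (nat_le_idem e f Hf H) as He. split; auto.
    destruct H as [g [Hg H]]. subst e. ra. rewrite (idem_commute g f Hg Hf), (idem2 f _ Hf). auto.
  - intros [He H]. exists e. split; auto. rewrite H at 1. apply idem_commute; auto.
Qed.

Lemma nat_le_antisym (s t : S) : nat_le s t -> nat_le t s -> s = t.
Proof.
  intros H1 H2.
  assert (Hd : forall x y, nat_le x y -> nat_le (x ^- ** x) (y ^- ** y)).
  { intros x y [e [He Hx]]. exists e. split; auto. subst x. rewrite inv_mul, (idem_inv e He). ra.
    rewrite (swap1 e (y ^-) y); [|auto|apply idem_ll]. unfold idempotent in He; rewrite He. auto. }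
  assert (E : s ^- ** s = t ^- ** t).
  { pose proof (Hd _ _ H1) as A. pose proof (Hd _ _ H2) as B.
    apply nat_le_idem_char in A; [|apply idem_ll]. apply nat_le_idem_char in B; [|apply idem_ll].
    destruct A as [_ A]; destruct B as [_ B]. rewrite A. rewrite (idem_commute _ (t ^- ** t)); try apply idem_ll. symmetry; exact B. }
  apply nat_le_char in H1. apply nat_le_char in H2. rewrite H1, E. apply inv_l'.
Qed.

Lemma nat_le_mul_l (u s t : S) : nat_le s t -> nat_le (u ** s) (u ** t).
Proof. intros [e [He H]]. exists e. split; auto. subst. apply mulA. Qed.

Lemma nat_le_mul_r (u s t : S) : nat_le s t -> nat_le (s ** u) (t ** u).
Proof.
  intros H. apply nat_le_char_l in H. apply (nat_le_intro_l _ _ (s ** s ^-)). apply idem_rr.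
  rewrite H at 1. ra. auto.
Qed.

Lemma nat_le_mul (s t s' t' : S) : nat_le s t -> nat_le s' t' -> nat_le (s ** s') (t ** t').
Proof. intros. eapply nat_le_trans. apply nat_le_mul_l; eauto. apply nat_le_mul_r; auto. Qed.

Lemma nat_le_inv (s t : S) : nat_le s t -> nat_le (s ^-) (t ^-).
Proof.
  intros [e [He H]]. apply (nat_le_intro_l _ _ e He). subst. rewrite inv_mul, idem_inv; auto.
Qed.

Lemma nat_le_zero (s : S) : nat_le zero s.
Proof. exists zero. split. apply idem_zero. symmetry. apply zero_r. Qed.

Lemma nat_le_ll (s t : S) : nat_le s t -> nat_le (s ^- ** s) (t ^- ** t).
Proof. intros. apply nat_le_mul; auto. apply nat_le_inv; auto. Qed.

Lemma nat_le_rr (s t : S) : nat_le s t -> nat_le (s ** s ^-) (t ** t ^-).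
Proof. intros. apply nat_le_mul; auto. apply nat_le_inv; auto. Qed.

Lemma nat_le_idem_r (s e : S) : idempotent e -> nat_le (s ** e) s.
Proof. intros He. exists e; split; auto. Qed.

Lemma nat_le_idem_l (s e : S) : idempotent e -> nat_le (e ** s) s.
Proof. intros He. apply (nat_le_intro_l _ _ e He). auto. Qed.

Lemma compat_bounded (x y w : S) : nat_le x w -> nat_le y w -> compatible x y.
Proof.
  intros H1 H2. split.
  - apply nat_le_char in H1, H2.
    assert (He : idempotent (x ^- ** x)) by apply idem_ll.
    assert (Hf : idempotent (y ^- ** y)) by apply idem_ll.
    set (e := x ^- ** x) in *. set (f := y ^- ** y) in *. rewrite H1, H2.
    rewrite inv_mul, (idem_inv e He). ra. rewrite (mulA (w ^-) w f).
    apply idem_prod_idem; auto. apply idem_prod_idem; auto. apply idem_ll.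
  - apply nat_le_char_l in H1, H2.
    assert (He : idempotent (x ** x ^-)) by apply idem_rr.
    assert (Hf : idempotent (y ** y ^-)) by apply idem_rr.
    set (e := x ** x ^-) in *. set (f := y ** y ^-) in *. rewrite H1, H2.
    rewrite inv_mul, (idem_inv f Hf). ra. rewrite (mulA w (w ^-) f).
    apply idem_prod_idem; auto. apply idem_prod_idem; auto. apply idem_rr.
Qed.


Lemma lub_unique (P : S -> Prop) a b j j' : is_lub_in P a b j -> is_lub_in P a b j' -> j = j'.
Proof.
  intros [A [B [C D]]] [A' [B' [C' D']]]. apply nat_le_antisym; auto.
Qed.

Lemma glb_unique (P : S -> Prop) a b j j' : is_glb_in S P a b j -> is_glb_in S P a b j' -> j = j'.
Proof.
  intros [A [B [C D]]] [A' [B' [C' D']]]. apply nat_le_antisym; auto.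
Qed.

Lemma idem_compat (e f : S) : idempotent e -> idempotent f -> compatible e f.
Proof.
  intros He Hf. split; rewrite ?(idem_inv e He), ?(idem_inv f Hf); apply idem_prod_idem; auto.
Qed.

Lemma glb_idem_prod (e f : S) : idempotent e -> idempotent f -> is_glb_in S idempotent e f (e ** f).
Proof.
  intros He Hf. split; [|split; [|split]].
  - apply idem_prod_idem; auto.
  - apply nat_le_idem_r; auto.
  - apply nat_le_idem_l; auto.
  - intros k Hk H1 H2. apply nat_le_idem_char in H1; auto. apply nat_le_idem_char in H2; auto.
    apply nat_le_idem_char. apply idem_prod_idem; auto. split; auto.
    destruct H1 as [_ H1]; destruct H2 as [_ H2]. rewrite mulA, <- H1. auto.
Qed.

Lemma idem_le_prod (e f : S) : idempotent f -> nat_le e f -> e = e ** f.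
Proof. intros Hf H. apply nat_le_idem_char in H; tauto. Qed.

Lemma idem_le_prod' (e f : S) : idempotent f -> nat_le e f -> e = f ** e.
Proof.
  intros Hf H. pose proof (nat_le_idem _ _ Hf H). rewrite (idem_commute f e); auto. apply idem_le_prod; auto.
Qed.

Lemma le_idem_mul_l (x e : S) : idempotent e -> nat_le x e -> forall y, nat_le (x ** y) y.
Proof.
  intros He H y. pose proof (nat_le_idem _ _ He H). apply nat_le_idem_l; auto.
Qed.
End ISBasics.


Section Hom.
Variables S T : InvSemigroup0.
Variable f : S -> T.
Hypothesis Hf : homomorphism S T f.

Lemma hom_mul a b : f (mul a b) = mul (f a) (f b).
Proof. apply Hf. Qed.
Lemma hom_zero : f zero = zero.
Proof. apply Hf. Qed.
Lemma hom_inv a : f (inv a) = inv (f a).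
Proof.
  apply inv_uniq; rewrite <- !hom_mul. f_equal; apply inv_l. f_equal; apply inv_r.
Qed.
Lemma hom_idem e : idempotent e -> idempotent (f e).
Proof. unfold idempotent. intro H. rewrite <- hom_mul, H. auto. Qed.
Lemma hom_le s t : nat_le s t -> nat_le (f s) (f t).
Proof. intros [e [He H]]. exists (f e). split. apply hom_idem; auto. subst; apply hom_mul. Qed.
End Hom.

Section PB.
Variable S : InvSemigroup0.
Definition X := {x : S | x <> zero}.
Definition pfun (R : X -> X -> Prop) := forall x y y', R x y -> R x y' -> y = y'.
Definition pinj (R : X -> X -> Prop) := forall x x' y, R x y -> R x' y -> x = x'.
Definition PBt := {R : X -> X -> Prop | pfun R /\ pinj R}.
Definition rel (p : PBt) : X -> X -> Prop := proj1_sig p.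
Coercion rel : PBt >-> Funclass.

Lemma PB_ext (p q : PBt) : (forall x y, p x y <-> q x y) -> p = q.
Proof.
  destruct p as [R HR], q as [Q HQ]. unfold rel; simpl. intro H.
  assert (R = Q). { extensionality x. extensionality y. apply propositional_extensionality. auto. }
  subst. f_equal. apply proof_irrelevance.
Qed.

Definition comp_rel (R Q : X -> X -> Prop) : X -> X -> Prop := fun x z => exists y, Q x y /\ R y z.
Lemma comp_ok (p q : PBt) : pfun (comp_rel p q) /\ pinj (comp_rel p q).
Proof.
  destruct p as [R [HR1 HR2]], q as [Q [HQ1 HQ2]]; unfold comp_rel, rel; simpl. split.
  - intros x z z' [y [A B]] [y' [C D]]. assert (y = y') by eauto. subst. eauto.
  - intros x x' z [y [A B]] [y' [C D]]. assert (y = y') by eauto. subst. eauto.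
Qed.
Definition pb_mul (p q : PBt) : PBt := exist _ (comp_rel p q) (comp_ok p q).

Lemma inv_ok (p : PBt) : pfun (fun x y => p y x) /\ pinj (fun x y => p y x).
Proof. destruct p as [R [H1 H2]]; unfold rel; simpl. split; intros ? ? ? ? ?; eauto. Qed.
Definition pb_inv (p : PBt) : PBt := exist _ (fun x y => p y x) (inv_ok p).

Lemma zero_ok : pfun (fun _ _ => False) /\ pinj (fun _ _ => False).
Proof. split; intros ? ? ? []. Qed.
Definition pb_zero : PBt := exist _ (fun _ _ => False) zero_ok.

Lemma pfunP (p : PBt) : pfun p. Proof. destruct p as [R [H1 H2]]; auto. Qed.
Lemma pinjP (p : PBt) : pinj p. Proof. destruct p as [R [H1 H2]]; auto. Qed.

Lemma pb_mulE (p q : PBt) x z : pb_mul p q x z <-> exists y, q x y /\ p y z.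
Proof. reflexivity. Qed.
Lemma pb_invE (p : PBt) x y : pb_inv p x y <-> p y x.
Proof. reflexivity. Qed.
Lemma pb_zeroE x y : pb_zero x y <-> False.
Proof. reflexivity. Qed.

Lemma pb_mulA (a b c : PBt) : pb_mul a (pb_mul b c) = pb_mul (pb_mul a b) c.
Proof.
  apply PB_ext. intros x y. rewrite !pb_mulE. setoid_rewrite pb_mulE. firstorder.
Qed.

Lemma pb_inv_l (a : PBt) : pb_mul (pb_mul a (pb_inv a)) a = a.
Proof.
  apply PB_ext. intros x y. rewrite pb_mulE. setoid_rewrite pb_mulE. setoid_rewrite pb_invE.
  split.
  - intros [u [H1 [v [H2 H3]]]]. pose proof (pinjP a _ _ _ H1 H2). subst. auto.
  - intros H. exists y. split; auto. exists x. auto.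
Qed.

Lemma pb_inv_r (a : PBt) : pb_mul (pb_mul (pb_inv a) a) (pb_inv a) = pb_inv a.
Proof.
  apply PB_ext. intros x y. rewrite pb_mulE. setoid_rewrite pb_mulE. setoid_rewrite pb_invE.
  split.
  - intros [u [H1 [v [H2 H3]]]]. pose proof (pfunP a _ _ _ H1 H2). subst. auto.
  - intros H. exists y. split; auto. exists x. auto.
Qed.

Lemma pb_inv_uniq (a b : PBt) : pb_mul (pb_mul a b) a = a -> pb_mul (pb_mul b a) b = b -> b = pb_inv a.
Proof.
  intros E1 E2. apply PB_ext. intros x y. rewrite pb_invE. split.
  - intro H. pose proof H as H0. rewrite <- E2 in H0. destruct H0 as [u [H1 [v [H2 H3]]]].
    pose proof (pfunP b _ _ _ H H1). subst u.
    pose proof (pinjP b _ _ _ H H3). subst v. auto.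
  - intro H. pose proof H as H0. rewrite <- E1 in H0. destruct H0 as [u [H1 [v [H2 H3]]]].
    pose proof (pfunP a _ _ _ H H1). subst u.
    pose proof (pinjP a _ _ _ H H3). subst v. auto.
Qed.

Lemma pb_zero_l (a : PBt) : pb_mul pb_zero a = pb_zero.
Proof. apply PB_ext. intros x y. rewrite pb_mulE, pb_zeroE. setoid_rewrite pb_zeroE. firstorder. Qed.
Lemma pb_zero_r (a : PBt) : pb_mul a pb_zero = pb_zero.
Proof. apply PB_ext. intros x y. rewrite pb_mulE, pb_zeroE. setoid_rewrite pb_zeroE. firstorder. Qed.

Definition PB : InvSemigroup0 :=
  {| carrier := PBt; mul := pb_mul; inv := pb_inv; zero := pb_zero;
     mulA := pb_mulA; inv_l := pb_inv_l; inv_r := pb_inv_r; inv_uniq := pb_inv_uniq;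
     zero_l := pb_zero_l; zero_r := pb_zero_r |}.

End PB.

Section PBBool.
Variable S : InvSemigroup0.
Local Notation PB := (PB S).
Local Notation PBt := (PBt S).
Local Notation X := (X S).

Definition mkPB (R : X -> X -> Prop) (H : pfun S R /\ pinj S R) : PBt := exist _ R H.

Lemma pb_idem_iff (e : PBt) : @idempotent PB e <-> forall x y, e x y -> x = y.
Proof.
  unfold idempotent. split.
  - intros H x y Hxy. pose proof Hxy as H0. rewrite <- H in H0. destruct H0 as [u [H1 H2]].
    pose proof (pfunP S e _ _ _ Hxy H1). subst u.
    apply (pinjP S e _ _ _ Hxy H2).
  - intros H. apply PB_ext. intros x y. simpl; unfold comp_rel. split.
    + intros [u [H1 H2]]. pose proof (H _ _ H1). subst. auto.
    + intros Hxy. exists x. pose proof (H _ _ Hxy). subst. auto.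
Qed.

Definition dom_id_rel (p : PBt) : X -> X -> Prop := fun x y => x = y /\ exists z, p x z.
Lemma dom_id_ok (p : PBt) : pfun S (dom_id_rel p) /\ pinj S (dom_id_rel p).
Proof. unfold dom_id_rel. split; intros ? ? ? [? ?] [? ?]; subst; auto. Qed.
Definition dom_id (p : PBt) : PBt := mkPB _ (dom_id_ok p).

Lemma pb_le_iff (p q : PBt) : @nat_le PB p q <-> forall x y, p x y -> q x y.
Proof.
  split.
  - intros [e [He H]] x y Hxy. rewrite pb_idem_iff in He. rewrite H in Hxy.
    simpl in Hxy; unfold comp_rel in Hxy. destruct Hxy as [u [H1 H2]].
    pose proof (He _ _ H1). subst. auto.
  - intros H. exists (dom_id p). split.
    + apply pb_idem_iff. intros x y [E _]. auto.
    + apply PB_ext. intros x y. simpl; unfold comp_rel. unfold dom_id, mkPB, rel; simpl. unfold dom_id_rel.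
      split.
      * intros Hxy. exists x. split; eauto. apply H; auto.
      * intros [u [[E [z Hz]] H2]]. subst u. pose proof (H _ _ Hz).
        pose proof (pfunP S q _ _ _ H0 H2). subst. auto.
Qed.

Lemma pb_compat_iff (a b : PBt) : @compatible PB a b <->
  ((forall x x' y, b x y -> a x' y -> x = x') /\ (forall x y y', b x y -> a x y' -> y = y')).
Proof.
  unfold compatible. rewrite !pb_idem_iff. simpl. split.
  - intros [H1 H2]. split.
    + intros x x' y Hb Ha. apply H1. exists y. split; auto.
    + intros x y y' Hb Ha. apply H2. exists x. split; auto.
  - intros [H1 H2]. split.
    + intros x z. intros [y [A B]]. eauto.
    + intros x z. intros [y [A B]]. eauto.
Qed.

Definition union_rel (a b : PBt) : X -> X -> Prop := fun x y => a x y \/ b x y.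
Lemma union_ok (a b : PBt) : @compatible PB a b -> pfun S (union_rel a b) /\ pinj S (union_rel a b).
Proof.
  rewrite pb_compat_iff. intros [H1 H2]. unfold union_rel. split.
  - intros x y y' [A|A] [B|B].
    + eapply pfunP; eauto.
    + symmetry. eauto.
    + eauto.
    + eapply pfunP; eauto.
  - intros x x' y [A|A] [B|B].
    + eapply pinjP; eauto.
    + symmetry. eauto.
    + eauto.
    + eapply pinjP; eauto.
Qed.
Definition pb_union (a b : PBt) (H : @compatible PB a b) : PBt := mkPB _ (union_ok a b H).

Lemma pb_union_lub (a b : PBt) (H : @compatible PB a b) : @is_lub_in PB anyS a b (pb_union a b H).
Proof.
  unfold is_lub_in, anyS. rewrite !pb_le_iff. unfold pb_union, mkPB, rel; simpl. unfold union_rel.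
  split; auto. split; [|split]; auto. intros k _ H1 H2. setoid_rewrite pb_le_iff in H1.
  setoid_rewrite pb_le_iff in H2. apply pb_le_iff. intros x y [A|A]; auto.
Qed.

Lemma pb_lub_iff (a b j : PBt) : @compatible PB a b ->
  (@is_lub_in PB anyS a b j <-> forall x y, j x y <-> a x y \/ b x y).
Proof.
  intros Hc. split.
  - intros Hj. pose proof (lub_unique PB _ _ _ _ _ Hj (pb_union_lub a b Hc)). subst j.
    unfold pb_union, mkPB, rel; simpl. unfold union_rel. tauto.
  - intros Hj. replace j with (pb_union a b Hc). apply pb_union_lub.
    apply PB_ext. intros x y. rewrite Hj. unfold pb_union, mkPB, rel; simpl. unfold union_rel. tauto.
Qed.


Lemma pb_lub_of_union (P : PBt -> Prop) (p q r : PBt) : P r -> (forall x y, r x y <-> p x y \/ q x y) ->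
  @is_lub_in PB P p q r.
Proof.
  intros HP H. unfold is_lub_in. rewrite !pb_le_iff. split; auto. split; [|split].
  - intros x y A. apply H; auto.
  - intros x y A. apply H; auto.
  - intros k _ H1 H2. rewrite pb_le_iff in H1, H2. apply pb_le_iff. intros x y A.
    apply H in A. destruct A; auto.
Qed.

Lemma pb_glb_of_inter (P : PBt -> Prop) (p q r : PBt) : P r -> (forall x y, r x y <-> p x y /\ q x y) ->
  is_glb_in PB P p q r.
Proof.
  intros HP H. unfold is_glb_in. rewrite !pb_le_iff. split; auto. split; [|split].
  - intros x y A. apply H; auto.
  - intros x y A. apply H; auto.
  - intros k _ H1 H2. rewrite pb_le_iff in H1, H2. apply pb_le_iff. intros x y A.
    apply H. auto.
Qed.

Lemma pb_glb_iff (P : PBt -> Prop) (p q r : PBt) : is_glb_in PB P p q r -> P (mkPB _ (comp_ok S p q)) ->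
  @idempotent PB p -> @idempotent PB q -> forall x y, r x y <-> p x y /\ q x y.
Proof.
  intros Hg HP Hp Hq.
  assert (E : r = mkPB _ (comp_ok S p q)).
  { eapply (glb_unique PB); eauto. apply pb_glb_of_inter; auto.
    intros x y. unfold mkPB, rel; simpl. unfold comp_rel. rewrite pb_idem_iff in Hp, Hq. split.
    - intros [u [A B]]. pose proof (Hq _ _ A); subst. pose proof (Hp _ _ B); subst. auto.
    - intros [A B]. exists y. pose proof (Hq _ _ B); subst. auto. }
  subst r. intros x y. unfold mkPB, rel; simpl. unfold comp_rel. rewrite pb_idem_iff in Hp, Hq. split.
  - intros [u [A B]]. pose proof (Hq _ _ A); subst. pose proof (Hp _ _ B); subst. auto.
  - intros [A B]. exists y. pose proof (Hq _ _ B); subst. auto.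
Qed.

Lemma pb_lub_iff_idem (p q r : PBt) : @is_lub_in PB idempotent p q r ->
  @idempotent PB p -> @idempotent PB q -> forall x y, r x y <-> p x y \/ q x y.
Proof.
  intros Hl Hp Hq.
  pose proof (idem_compat PB p q Hp Hq) as Hc.
  assert (E : r = pb_union p q Hc).
  { eapply (lub_unique PB); eauto. apply pb_lub_of_union.
    - apply pb_idem_iff. rewrite pb_idem_iff in Hp, Hq. intros x y [A|A]; auto.
    - intros x y. unfold pb_union, mkPB, rel; simpl. unfold union_rel. tauto. }
  subst r. intros x y. unfold pb_union, mkPB, rel; simpl. unfold union_rel. tauto.
Qed.

Definition diff_rel (e f : PBt) : X -> X -> Prop := fun x y => e x y /\ ~ f x y.
Lemma diff_ok (e f : PBt) : pfun S (diff_rel e f) /\ pinj S (diff_rel e f).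
Proof. unfold diff_rel. split; intros ? ? ? [A _] [B _]; [eapply pfunP|eapply pinjP]; eauto. Qed.

Theorem PB_boolean : boolean_inverse_semigroup PB.
Proof.
  split; [|split].
  - intros a b Hc. exists (pb_union a b Hc). apply pb_union_lub.
  - intros a b j t Hc Hj. rewrite (pb_lub_iff a b j Hc) in Hj. split.
    + apply pb_lub_of_union. exact I. intros x z. simpl. unfold comp_rel. split.
      * intros [y [A B]]. apply Hj in A. destruct A; [left|right]; eauto.
      * intros [[y [A B]]|[y [A B]]]; exists y; split; auto; apply Hj; auto.
    + apply pb_lub_of_union. exact I. intros x z. simpl. unfold comp_rel. split.
      * intros [y [A B]]. apply Hj in B. destruct B; [left|right]; eauto.
      * intros [[y [A B]]|[y [A B]]]; exists y; split; auto; apply Hj; auto.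
  - split; [|split; [|split; [|split]]].
    + intros e f He Hf. exists (pb_union e f (idem_compat PB e f He Hf)). apply pb_lub_of_union.
      * apply pb_idem_iff. intros x y [A|A]; [apply (proj1 (pb_idem_iff e) He)|apply (proj1 (pb_idem_iff f) Hf)]; auto.
      * intros x y. unfold pb_union, mkPB, rel; simpl. unfold union_rel. tauto.
    + intros e f He Hf. exists (mul e f). apply glb_idem_prod; auto.
    + split. apply idem_zero. intros e _. apply nat_le_zero.
    + intros e f g j m1 m2 x He Hf Hg Hj Hm1 Hm2 Hx.
      assert (Hjid : @idempotent PB j) by (destruct Hj; auto).
      pose proof (pb_lub_iff_idem _ _ _ Hj Hf Hg) as J.
      pose proof (pb_glb_iff _ _ _ _ Hm1 (idem_prod_idem PB e f He Hf) He Hf) as M1.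
      pose proof (pb_glb_iff _ _ _ _ Hm2 (idem_prod_idem PB e g He Hg) He Hg) as M2.
      pose proof (pb_glb_iff _ _ _ _ Hx (idem_prod_idem PB e j He Hjid) He Hjid) as MX.
      apply pb_lub_of_union.
      * destruct Hx; auto.
      * intros u v. rewrite M1, M2, MX, J. tauto.
    + intros e f He Hf Hfe. exists (mkPB _ (diff_ok e f)).
      assert (Hd : @idempotent PB (mkPB _ (diff_ok e f))).
      { apply pb_idem_iff. rewrite pb_idem_iff in He. intros x y [A _]. auto. }
      split; auto. split; [|split].
      * apply pb_le_iff. intros x y [A _]. auto.
      * apply pb_glb_of_inter. apply idem_zero. intros x y. unfold mkPB, rel; simpl. unfold diff_rel. tauto.
      * apply pb_lub_of_union. auto. intros x y. unfold mkPB, rel; simpl. unfold diff_rel.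
        rewrite pb_le_iff in Hfe. specialize (Hfe x y). tauto.
Qed.

End PBBool.


Section WP.
Variable S : InvSemigroup0.
Local Notation "x ** y" := (@mul S x y) (at level 40, left associativity).
Local Notation "x ^-" := (@inv S x) (at level 2).
Local Notation X := (X S).
Local Notation PB := (PB S).
Local Notation PBt := (PBt S).
Ltac ra := repeat rewrite <- mulA.

Lemma X_eq (x y : X) : proj1_sig x = proj1_sig y -> x = y.
Proof. destruct x, y; simpl. intro; subst. f_equal. apply proof_irrelevance. Qed.

Definition th_rel (s : S) : X -> X -> Prop :=
  fun x y => s ^- ** s ** proj1_sig x = proj1_sig x /\ proj1_sig y = s ** proj1_sig x.

Lemma th_ok (s : S) : pfun S (th_rel s) /\ pinj S (th_rel s).
Proof.
  unfold th_rel. split.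
  - intros x y y' [_ A] [_ B]. apply X_eq. congruence.
  - intros x x' y [A1 A2] [B1 B2]. apply X_eq. rewrite <- A1, <- B1. rewrite <- !mulA. congruence.
Qed.

Definition th (s : S) : PBt := mkPB S _ (th_ok s).

Lemma thE (s : S) x y : th s x y <-> s ^- ** s ** proj1_sig x = proj1_sig x /\ proj1_sig y = s ** proj1_sig x.
Proof. reflexivity. Qed.

Lemma th_hom : homomorphism S PB th.
Proof.
  split.
  - intros a b. apply PB_ext. intros x y. simpl. unfold comp_rel, th_rel. split.
    + intros [H1 H2]. rewrite inv_mul in H1.
      assert (Hb : b ^- ** b ** proj1_sig x = proj1_sig x).
      { rewrite <- H1 at 1. ra. rewrite inv_r''. repeat rewrite <- mulA in H1. exact H1. }
      assert (Hnz : b ** proj1_sig x <> zero).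
      { intro E. destruct x as [x nx]. simpl in *. apply nx. rewrite <- Hb. ra. rewrite E. apply zero_r. }
      exists (exist (fun z : S => z <> zero) _ Hnz). simpl. split; [split|split]; auto.
      * symmetry. rewrite <- H1 at 1. ra. rewrite (swap2 S b (b ^-) (a ^-) a); [|apply idem_rr|apply idem_ll].
        rewrite inv_l''. auto.
      * rewrite H2. ra. auto.
    + intros [u [[A1 A2] [B1 B2]]]. split.
      * rewrite inv_mul. ra. rewrite <- A2.
        rewrite (mulA (a ^-) a), B1, A2. rewrite mulA. auto.
      * rewrite B2, A2. apply mulA.
  - apply PB_ext. intros x y. simpl. unfold th_rel. split; [|intros []].
    intros [H _]. destruct x as [x nx]. simpl in H. rewrite inv_zero, zero_l, zero_l in H. auto.
Qed.

End WP.


Section BIS.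
Variable B : InvSemigroup0.
Hypothesis HB : boolean_inverse_semigroup B.
Local Notation "x ** y" := (@mul B x y) (at level 40, left associativity).
Local Notation "x ^-" := (@inv B x) (at level 2).
Local Notation "x <= y" := (@nat_le B x y).
Local Notation idem := (@idempotent B).
Ltac ra := repeat rewrite <- mulA.
Implicit Types a b c e f j k s x y z w g : B.

Definition is_join (a b j : B) := is_lub_in anyS a b j.

Lemma join_exists a b : compatible a b -> exists j, is_join a b j.
Proof. destruct HB as [H _]. apply H. Qed.

Definition jn (a b : B) : B :=
  match excluded_middle_informative (compatible a b) with
  | left H => proj1_sig (constructive_indefinite_description _ (join_exists a b H))
  | right _ => zero
  end.

Lemma jn_spec a b : compatible a b -> is_join a b (jn a b).
Proof.
  intro H. unfold jn. destruct (excluded_middle_informative (compatible a b)); [|contradiction].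
  apply proj2_sig.
Qed.

Lemma join_ub1 a b j : is_join a b j -> a <= j. Proof. intros [_ [H _]]; auto. Qed.
Lemma join_ub2 a b j : is_join a b j -> b <= j. Proof. intros [_ [_ [H _]]]; auto. Qed.
Lemma join_least a b j k : is_join a b j -> a <= k -> b <= k -> j <= k.
Proof. intros [_ [_ [_ H]]] ? ?; apply H; auto. exact I. Qed.

Lemma join_compat a b j : is_join a b j -> compatible a b.
Proof. intro H. eapply compat_bounded. eapply join_ub1; eauto. eapply join_ub2; eauto. Qed.

Lemma join_jn a b j : is_join a b j -> j = jn a b.
Proof. intro H. eapply (lub_unique B); eauto. apply jn_spec. eapply join_compat; eauto. Qed.

Lemma join_sym a b j : is_join a b j -> is_join b a j.
Proof. intros [A [C [D E]]]. refine (conj A (conj D (conj C _))). intros k Hk H1 H2. apply E; auto. Qed.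

Lemma compat_sym a b : compatible a b -> compatible b a.
Proof. intro H. apply join_compat with (jn a b). apply join_sym, jn_spec; auto. Qed.

Lemma jn_comm a b : compatible a b -> jn a b = jn b a.
Proof. intro H. apply join_jn. apply join_sym. apply jn_spec; auto. Qed.

Lemma le_jn_l a b : compatible a b -> a <= jn a b.
Proof. intro H. eapply join_ub1. apply jn_spec; auto. Qed.
Lemma le_jn_r a b : compatible a b -> b <= jn a b.
Proof. intro H. eapply join_ub2. apply jn_spec; auto. Qed.
Lemma jn_le a b k : compatible a b -> a <= k -> b <= k -> jn a b <= k.
Proof. intros H ? ?. apply (join_least a b); auto. apply jn_spec; auto. Qed.

Lemma join_of_le a b : b <= a -> is_join a b a.
Proof.
  intro H. refine (conj I (conj (nat_le_refl _ _) (conj H _))). intros k _ H1 H2; auto.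
Qed.
Lemma jn_absorb a b : b <= a -> jn a b = a.
Proof. intro H. symmetry. apply join_jn. apply join_of_le; auto. Qed.
Lemma jn_zero_r a : jn a zero = a.
Proof. apply jn_absorb. apply nat_le_zero. Qed.
Lemma jn_zero_l a : jn zero a = a.
Proof. rewrite <- (jn_zero_r a) at 2. symmetry. apply jn_comm. apply compat_bounded with a. apply nat_le_refl. apply nat_le_zero. Qed.

Lemma jn_mul_l s a b : compatible a b -> s ** jn a b = jn (s ** a) (s ** b).
Proof.
  intro H. destruct HB as [_ [HD _]]. apply join_jn. apply (HD a b (jn a b) s H (jn_spec a b H)).
Qed.
Lemma jn_mul_r s a b : compatible a b -> jn a b ** s = jn (a ** s) (b ** s).
Proof.
  intro H. destruct HB as [_ [HD _]]. apply join_jn. apply (HD a b (jn a b) s H (jn_spec a b H)).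
Qed.

Lemma compat_mul_l s a b : compatible a b -> compatible (s ** a) (s ** b).
Proof.
  intro H. apply compat_bounded with (s ** jn a b); apply nat_le_mul_l; [apply le_jn_l|apply le_jn_r]; auto.
Qed.
Lemma compat_mul_r s a b : compatible a b -> compatible (a ** s) (b ** s).
Proof.
  intro H. apply compat_bounded with (jn a b ** s); apply nat_le_mul_r; [apply le_jn_l|apply le_jn_r]; auto.
Qed.

Lemma jn_idem e f : idem e -> idem f -> idem (jn e f).
Proof.
  intros He Hf. pose proof (idem_compat B e f He Hf) as Hc.
  assert (E1 : e ** jn e f = e).
  { rewrite jn_mul_l; auto. rewrite He. apply jn_absorb. apply nat_le_idem_r; auto. }
  assert (E2 : f ** jn e f = f).
  { rewrite jn_mul_l; auto. rewrite Hf. rewrite jn_comm. apply jn_absorb. apply nat_le_idem_r; auto.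
    apply compat_bounded with f. apply nat_le_idem_r; auto. apply nat_le_refl. }
  unfold idempotent. rewrite jn_mul_r at 1; auto. rewrite E1, E2. auto.
Qed.

Lemma le_trans a b c : a <= b -> b <= c -> a <= c.
Proof. apply nat_le_trans. Qed.

Lemma jn_inv a b : compatible a b -> (jn a b) ^- = jn (a ^-) (b ^-).
Proof.
  intro H. apply join_jn. split. exact I. split; [|split].
  - apply nat_le_inv, le_jn_l; auto.
  - apply nat_le_inv, le_jn_r; auto.
  - intros k _ H1 H2. apply nat_le_inv in H1, H2. rewrite inv_inv in H1, H2.
    rewrite <- (inv_inv B k). apply nat_le_inv. apply jn_le; auto.
Qed.

Lemma jn_idem_le e f k : idem e -> idem f -> (jn e f <= k <-> e <= k /\ f <= k).
Proof.
  intros He Hf. pose proof (idem_compat B e f He Hf). split.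
  - intro H1. split; eapply le_trans; eauto. apply le_jn_l; auto. apply le_jn_r; auto.
  - intros [H1 H2]. apply jn_le; auto.
Qed.

End BIS.

Section BIS2.
Variable B : InvSemigroup0.
Hypothesis HB : boolean_inverse_semigroup B.
Local Notation "x ** y" := (@mul B x y) (at level 40, left associativity).
Local Notation "x ^-" := (@inv B x) (at level 2).
Local Notation "x <= y" := (@nat_le B x y).
Local Notation idem := (@idempotent B).
Local Notation jn := (jn B HB).
Local Notation is_join := (is_join B).
Ltac ra := repeat rewrite <- mulA.
Implicit Types a b c e f j k s x y z w g p q r : B.
Implicit Types L M : list B.

Hint Resolve idem_prod_idem idem_zero idem_ll idem_rr : idb.
Hint Resolve jn_idem : idb.
Hint Resolve idem_compat : idb.

Definition jl (L : list B) : B := fold_right jn zero L.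
Definition bounded L w := forall p, In p L -> p <= w.
Definition is_jl L j := (forall p, In p L -> p <= j) /\ (forall k, bounded L k -> j <= k).

Lemma is_jl_unique L j j' : is_jl L j -> is_jl L j' -> j = j'.
Proof. intros [A B1] [C D]. apply nat_le_antisym; [apply B1|apply D]; auto. Qed.

Lemma jl_is L w : bounded L w -> is_jl L (jl L).
Proof.
  induction L as [|p L IH]; intros Hb.
  - split. intros ? []. intros k _. apply nat_le_zero.
  - assert (HbL : bounded L w) by (intros q Hq; apply Hb; right; auto).
    destruct (IH HbL) as [IH1 IH2].
    assert (Hc : compatible p (jl L)).
    { apply compat_bounded with w. apply Hb; left; auto. apply IH2; auto. }
    simpl. split.
    + intros q [<-|Hq]. apply le_jn_l; auto. apply le_trans with (jl L); auto. apply le_jn_r; auto.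
    + intros k Hk. apply jn_le; auto. apply Hk; left; auto. apply IH2. intros q Hq; apply Hk; right; auto.
Qed.

Lemma jl_le L k : bounded L k -> jl L <= k.
Proof. intro H. apply (jl_is L k H). auto. Qed.
Lemma le_jl L w p : bounded L w -> In p L -> p <= jl L.
Proof. intros H Hp. apply (jl_is L w H). auto. Qed.

Lemma bounded_cons p L w : bounded (p :: L) w <-> p <= w /\ bounded L w.
Proof.
  split. intro H. split. apply H; left; auto. intros q Hq; apply H; right; auto.
  intros [H1 H2] q [<-|Hq]; auto.
Qed.
Lemma bounded_app L M w : bounded (L ++ M) w <-> bounded L w /\ bounded M w.
Proof.
  split. intro H. split; intros q Hq; apply H; apply in_or_app; auto.
  intros [H1 H2] q Hq. apply in_app_or in Hq. destruct Hq; auto.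
Qed.
Lemma bounded_trans L w w' : bounded L w -> w <= w' -> bounded L w'.
Proof. intros H H' q Hq. eapply le_trans; eauto. Qed.

Lemma jl_cons p L w : bounded (p :: L) w -> jl (p :: L) = jn p (jl L).
Proof. auto. Qed.

Lemma jl_app L M w : bounded (L ++ M) w -> jl (L ++ M) = jn (jl L) (jl M).
Proof.
  intro H. pose proof H as H'. apply bounded_app in H'. destruct H' as [H1 H2].
  assert (Hc : compatible (jl L) (jl M)) by (apply compat_bounded with w; apply jl_le; auto).
  apply (is_jl_unique (L ++ M)). apply jl_is with w; auto. split.
  - intros q Hq. apply in_app_or in Hq. destruct Hq.
    + apply le_trans with (jl L). apply le_jl with w; auto. apply le_jn_l; auto.
    + apply le_trans with (jl M). apply le_jl with w; auto. apply le_jn_r; auto.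
  - intros k Hk. apply bounded_app in Hk. destruct Hk. apply jn_le; auto; apply jl_le; auto.
Qed.

Lemma bounded_map_mul_l s L w : bounded L w -> bounded (map (mul s) L) (s ** w).
Proof. intros H q Hq. apply in_map_iff in Hq. destruct Hq as [p [<- Hp]]. apply nat_le_mul_l; auto. Qed.
Lemma bounded_map_mul_r s L w : bounded L w -> bounded (map (fun p => p ** s) L) (w ** s).
Proof. intros H q Hq. apply in_map_iff in Hq. destruct Hq as [p [<- Hp]]. apply nat_le_mul_r; auto. Qed.
Lemma bounded_map_inv L w : bounded L w -> bounded (map inv L) (w ^-).
Proof. intros H q Hq. apply in_map_iff in Hq. destruct Hq as [p [<- Hp]]. apply nat_le_inv; auto. Qed.

Lemma jl_mul_l s L w : bounded L w -> s ** jl L = jl (map (mul s) L).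
Proof.
  induction L as [|p L IH]; intros Hb.
  - simpl. apply zero_r.
  - apply bounded_cons in Hb. destruct Hb as [H1 H2]. simpl.
    assert (Hc : compatible p (jl L)) by (apply compat_bounded with w; auto; apply jl_le; auto).
    rewrite jn_mul_l; auto. rewrite IH; auto.
Qed.

Lemma jl_mul_r s L w : bounded L w -> jl L ** s = jl (map (fun p => p ** s) L).
Proof.
  induction L as [|p L IH]; intros Hb.
  - simpl. apply zero_l.
  - apply bounded_cons in Hb. destruct Hb as [H1 H2]. simpl.
    assert (Hc : compatible p (jl L)) by (apply compat_bounded with w; auto; apply jl_le; auto).
    rewrite jn_mul_r; auto. rewrite IH; auto.
Qed.

Lemma jl_inv L w : bounded L w -> (jl L) ^- = jl (map inv L).
Proof.
  induction L as [|p L IH]; intros Hb.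
  - simpl. apply inv_zero.
  - apply bounded_cons in Hb. destruct Hb as [H1 H2]. simpl.
    assert (Hc : compatible p (jl L)) by (apply compat_bounded with w; auto; apply jl_le; auto).
    rewrite jn_inv; auto. rewrite IH; auto.
Qed.

Definition allidem L := forall p, In p L -> idem p.

Lemma jl_idem L : allidem L -> idem (jl L) /\ is_jl L (jl L).
Proof.
  induction L as [|p L IH]; intros Ha.
  - split. apply idem_zero. split. intros ? []. intros k _. apply nat_le_zero.
  - assert (HaL : allidem L) by (intros q Hq; apply Ha; right; auto).
    assert (Hp : idem p) by (apply Ha; left; auto).
    destruct (IH HaL) as [Hi [IH1 IH2]].
    assert (Hc : compatible p (jl L)) by (apply idem_compat; auto).
    simpl. split. apply jn_idem; auto. split.
    + intros q [<-|Hq]. apply le_jn_l; auto. apply le_trans with (jl L); auto. apply le_jn_r; auto.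
    + intros k Hk. apply jn_le; auto. apply Hk; left; auto. apply IH2. intros q Hq; apply Hk; right; auto.
Qed.

Definition diff_spec x k g := idem g /\ g <= x /\ g ** k = zero /\ is_join g (x ** k) x.

Lemma idem_le_char e f : idem f -> (e <= f <-> idem e /\ e = e ** f).
Proof. apply nat_le_idem_char. Qed.

Lemma prod_le_l e f : idem f -> e ** f <= e.
Proof. apply nat_le_idem_r. Qed.
Lemma prod_le_r e f : idem e -> e ** f <= f.
Proof. apply nat_le_idem_l. Qed.

Lemma dif_exists x k : idem x -> idem k -> exists g, diff_spec x k g.
Proof.
  intros Hx Hk. destruct HB as [_ [_ [_ [_ [_ [_ HC]]]]]].
  destruct (HC x (x ** k) Hx (idem_prod_idem _ _ _ Hx Hk) (prod_le_l _ _ Hk)) as [g [Hg [Hgx [Hglb Hlub]]]].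
  exists g. split; auto. split; auto. split.
  - pose proof (glb_unique B _ _ _ _ _ Hglb (glb_idem_prod B (x ** k) g (idem_prod_idem _ _ _ Hx Hk) Hg)) as E.
    rewrite (idem_le_prod' B g x Hx Hgx). rewrite <- mulA. rewrite (idem_commute B g k Hg Hk).
    rewrite mulA. auto.
  - assert (Hc : compatible (x ** k) g) by (apply idem_compat; auto with idb).
    assert (E : x = jn (x ** k) g).
    { apply (lub_unique B idempotent (x ** k) g); auto. pose proof (jn_spec B HB _ _ Hc) as J.
      destruct J as [_ [J1 [J2 J3]]]. split. apply jn_idem; auto with idb. split; auto. split; auto.
      intros k' _ H1 H2. apply J3; auto. exact I. }
    rewrite E at 2. apply join_sym. apply jn_spec; auto.
Qed.

Definition dif x k : B :=
  match excluded_middle_informative (idem x /\ idem k) with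
  | left H => proj1_sig (constructive_indefinite_description _ (dif_exists x k (proj1 H) (proj2 H)))
  | right _ => zero
  end.

Lemma dif_spec x k : idem x -> idem k -> diff_spec x k (dif x k).
Proof.
  intros Hx Hk. unfold dif. destruct (excluded_middle_informative (idem x /\ idem k)) as [H|H].
  apply proj2_sig. tauto.
Qed.

Lemma dif_aux x k g g' : idem x -> idem k -> diff_spec x k g -> diff_spec x k g' -> g = g ** g'.
Proof.
  intros Hx Hk [Hg [Hgx [Hgk Hgj]]] [Hg' [Hgx' [Hgk' Hgj']]].
  rewrite (idem_le_prod B g x Hx Hgx) at 1.
  rewrite (join_jn B HB _ _ _ Hgj'). rewrite jn_mul_l; auto. 2: eapply join_compat; eauto.
  rewrite mulA. rewrite <- (idem_le_prod B g x Hx Hgx). rewrite Hgk. apply jn_zero_r; auto.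
Qed.

Lemma dif_unique x k g : idem x -> idem k -> diff_spec x k g -> g = dif x k.
Proof.
  intros Hx Hk Hs. pose proof (dif_spec x k Hx Hk) as Hd.
  rewrite (dif_aux x k g (dif x k)); auto. rewrite (dif_aux x k (dif x k) g) at 2; auto.
  apply idem_commute. destruct Hs; auto. destruct Hd; auto.
Qed.

Section DifLemmas.
Variables x k : B.
Hypothesis Hx : idem x.
Hypothesis Hk : idem k.
Lemma dif_idem : idem (dif x k). Proof. apply (dif_spec x k Hx Hk). Qed.
Lemma dif_le : dif x k <= x. Proof. apply (dif_spec x k Hx Hk). Qed.
Lemma dif_kill : dif x k ** k = zero. Proof. apply (dif_spec x k Hx Hk). Qed.
Lemma dif_join : is_join (dif x k) (x ** k) x. Proof. apply (dif_spec x k Hx Hk). Qed.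
Lemma dif_jn : jn (dif x k) (x ** k) = x.
Proof. symmetry. apply join_jn; auto. apply dif_join. Qed.
End DifLemmas.
Hint Resolve dif_idem : idb.

Lemma join_intro_idem a b x : idem a -> idem b -> a <= x -> b <= x -> x <= jn a b -> is_join a b x.
Proof.
  intros Ha Hb H1 H2 H3. assert (x = jn a b).
  { apply nat_le_antisym; auto. apply jn_le; auto with idb. }
  subst. apply jn_spec; auto with idb.
Qed.

Lemma dif_zero_r x : idem x -> dif x zero = x.
Proof.
  intro Hx. symmetry. apply dif_unique; auto with idb. split; auto. split. apply nat_le_refl.
  split. apply zero_r. rewrite zero_r. apply join_of_le. apply nat_le_zero.
Qed.

Lemma dif_mul_r x k y : idem x -> idem k -> idem y -> dif x k ** y = dif (x ** y) k.
Proof.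
  intros Hx Hk Hy. apply dif_unique; auto with idb. split; [|split; [|split]].
  - auto with idb.
  - apply nat_le_mul_r. apply dif_le; auto.
  - rewrite <- mulA, (idem_commute B y k Hy Hk), mulA, dif_kill; auto. apply zero_l.
  - destruct HB as [_ [HD _]]. pose proof (dif_join x k Hx Hk) as J.
    destruct (HD _ _ _ y (join_compat B _ _ _ J) J) as [_ J2].
    replace (x ** y ** k) with (x ** k ** y); auto.
    rewrite <- !mulA. f_equal. apply idem_commute; auto.
Qed.


Lemma idem_jn_compat e f : idem e -> idem f -> compatible e f.
Proof. apply idem_compat. Qed.
Hint Resolve idem_jn_compat : idb.

Lemma dif_conj x k t : idem x -> idem k ->
  t ^- ** dif x k ** t = dif (t ^- ** x ** t) (t ^- ** k ** t).
Proof.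
  intros Hx Hk. apply dif_unique; try apply idem_conj'; auto. split; [|split; [|split]].
  - apply idem_conj'. auto with idb.
  - apply nat_le_mul_r, nat_le_mul_l, dif_le; auto.
  - ra. rewrite (mulA t (t ^-) (k ** t)). rewrite (idem_comm_r B (dif x k) (t ** t ^-)); auto with idb.
    rewrite (mulA (dif x k) k t), dif_kill, zero_l, zero_r, zero_r; auto.
  - destruct HB as [_ [HD _]]. pose proof (dif_join x k Hx Hk) as J.
    destruct (HD _ _ _ (t ^-) (join_compat B _ _ _ J) J) as [J1 _].
    destruct (HD _ _ _ t (join_compat B _ _ _ J1) J1) as [_ J2].
    replace (t ^- ** x ** t ** (t ^- ** k ** t)) with (t ^- ** (x ** k) ** t); auto.
    ra. rewrite (mulA t (t ^-) (k ** t)). rewrite (idem_comm_r B x (t ** t ^-)); auto with idb.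
    ra. rewrite (inv_r'' B t). auto.
Qed.

Lemma dif_jn_l x y z : idem x -> idem y -> idem z -> dif (jn x y) z = jn (dif x z) (dif y z).
Proof.
  intros Hx Hy Hz. symmetry. apply dif_unique; auto with idb. split; [|split; [|split]].
  - auto with idb.
  - apply jn_le; auto with idb.
    + apply le_trans with x. apply dif_le; auto. apply le_jn_l; auto with idb.
    + apply le_trans with y. apply dif_le; auto. apply le_jn_r; auto with idb.
  - rewrite jn_mul_r; auto with idb. rewrite !dif_kill; auto. apply jn_zero_r; auto.
  - apply join_intro_idem; auto with idb.
    + apply jn_le; auto with idb.
      * apply le_trans with x. apply dif_le; auto. apply le_jn_l; auto with idb.
      * apply le_trans with y. apply dif_le; auto. apply le_jn_r; auto with idb.
    + apply prod_le_l; auto.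
    + apply jn_le; auto with idb.
      * rewrite <- (dif_jn x z) at 1; auto. apply jn_le; auto with idb.
        -- apply le_trans with (jn (dif x z) (dif y z)). apply le_jn_l; auto with idb. apply le_jn_l; auto with idb.
        -- apply le_trans with (jn x y ** z). apply nat_le_mul_r, le_jn_l; auto with idb. apply le_jn_r; auto with idb.
      * rewrite <- (dif_jn y z) at 1; auto. apply jn_le; auto with idb.
        -- apply le_trans with (jn (dif x z) (dif y z)). apply le_jn_r; auto with idb. apply le_jn_l; auto with idb.
        -- apply le_trans with (jn x y ** z). apply nat_le_mul_r, le_jn_r; auto with idb. apply le_jn_r; auto with idb.
Qed.

Lemma dif_jn_r x y w : idem x -> idem y -> idem w -> dif x (jn y w) = dif (dif x y) w.
Proof.
  intros Hx Hy Hw. symmetry. apply dif_unique; auto with idb.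
  set (r := dif (dif x y) w).
  assert (Hr : idem r) by (unfold r; auto with idb).
  assert (Hrx : r <= dif x y) by (unfold r; apply dif_le; auto with idb).
  assert (Hrx' : r <= x) by (apply le_trans with (dif x y); auto; apply dif_le; auto).
  split; [|split; [|split]]; auto.
  - rewrite jn_mul_l; auto with idb. unfold r at 2. rewrite dif_kill; auto with idb.
    rewrite (idem_le_prod B r (dif x y)); auto with idb. rewrite <- mulA, dif_kill; auto.
    rewrite zero_r. apply jn_zero_r; auto.
  - apply join_intro_idem; auto with idb.
    + apply prod_le_l; auto with idb.
    + rewrite <- (dif_jn x y) at 1; auto. apply jn_le; auto with idb.
      * rewrite <- (dif_jn (dif x y) w); auto with idb. fold r. apply jn_le; auto with idb.
        apply le_jn_l; auto with idb.
        apply le_trans with (x ** w). apply nat_le_mul_r, dif_le; auto.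
        apply le_trans with (x ** jn y w). apply nat_le_mul_l, le_jn_r; auto with idb.
        apply le_jn_r; auto with idb.
      * apply le_trans with (x ** jn y w). apply nat_le_mul_l, le_jn_l; auto with idb.
        apply le_jn_r; auto with idb.
Qed.

Lemma dif_dif_r x y k : idem x -> idem y -> idem k -> dif x (dif y k) = jn (dif x y) (x ** y ** k).
Proof.
  intros Hx Hy Hk. symmetry. apply dif_unique; auto with idb.
  assert (Hxyk : x ** y ** k <= x) by (apply le_trans with (x ** y); apply prod_le_l; auto with idb).
  assert (Hr : jn (dif x y) (x ** y ** k) <= x) by (apply jn_le; auto with idb; apply dif_le; auto).
  split; [|split; [|split]]; auto with idb.
  - rewrite jn_mul_r; auto with idb.
    rewrite (idem_le_prod' B (dif y k) y); auto with idb. 2: apply dif_le; auto.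
    rewrite mulA, dif_kill; auto. rewrite zero_l.
    rewrite <- (idem_le_prod' B (dif y k) y); auto with idb. 2: apply dif_le; auto.
    rewrite <- (mulA (x ** y) k (dif y k)), (idem_commute B k (dif y k)); auto with idb.
    rewrite dif_kill; auto. rewrite zero_r. apply jn_zero_r; auto.
  - apply join_intro_idem; auto with idb.
    + apply prod_le_l; auto with idb.
    + rewrite <- (dif_jn x y) at 1; auto. apply jn_le; auto with idb.
      * apply le_trans with (jn (dif x y) (x ** y ** k)); apply le_jn_l; auto with idb.
      * assert (E : x ** y = jn (x ** dif y k) (x ** (y ** k))) by (rewrite <- jn_mul_l, dif_jn; auto with idb).
        rewrite E at 1. apply jn_le; auto with idb.
        apply le_jn_r; auto with idb.
        apply le_trans with (jn (dif x y) (x ** y ** k)). rewrite mulA. apply le_jn_r; auto with idb.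
        apply le_jn_l; auto with idb.
Qed.

End BIS2.


Section Gen.
Variables (S B : InvSemigroup0) (beta : S -> B).
Hypothesis Hbool : is_booleanization S B beta.
Let HB : boolean_inverse_semigroup B := proj1 Hbool.
Local Notation "x ** y" := (@mul B x y) (at level 40, left associativity).
Local Notation "x ^-" := (@inv B x) (at level 2).
Local Notation idem := (@idempotent B).
Local Notation jn := (jn B HB).
Local Notation dif := (dif B HB).

Variable P : B -> Prop.
Hypothesis Pbeta : forall s, P (beta s).
Hypothesis Pzero : P zero.
Hypothesis Pmul : forall x y, P x -> P y -> P (x ** y).
Hypothesis Pinv : forall x, P x -> P (x ^-).
Hypothesis Pjn : forall x y, P x -> P y -> compatible x y -> P (jn x y).
Hypothesis Pdif : forall x k, P x -> P k -> idem x -> idem k -> P (dif x k).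

Definition Tc := {x : B | P x}.
Definition tv (a : Tc) : B := proj1_sig a.

Lemma T_ext (a b : Tc) : tv a = tv b -> a = b.
Proof. destruct a, b; unfold tv; simpl; intro; subst; f_equal; apply proof_irrelevance. Qed.

Definition tmul (a b : Tc) : Tc := exist _ (tv a ** tv b) (Pmul _ _ (proj2_sig a) (proj2_sig b)).
Definition tinv (a : Tc) : Tc := exist _ ((tv a) ^-) (Pinv _ (proj2_sig a)).
Definition tzero : Tc := exist _ zero Pzero.

Lemma tmulA a b c : tmul a (tmul b c) = tmul (tmul a b) c.
Proof. apply T_ext. apply mulA. Qed.
Lemma tinv_l a : tmul (tmul a (tinv a)) a = a.
Proof. apply T_ext. apply inv_l. Qed.
Lemma tinv_r a : tmul (tmul (tinv a) a) (tinv a) = tinv a.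
Proof. apply T_ext. apply inv_r. Qed.
Lemma tinv_uniq a b : tmul (tmul a b) a = a -> tmul (tmul b a) b = b -> b = tinv a.
Proof.
  intros H1 H2. apply T_ext. apply inv_uniq.
  apply (f_equal tv) in H1. exact H1. apply (f_equal tv) in H2. exact H2.
Qed.
Lemma tzero_l a : tmul tzero a = tzero.
Proof. apply T_ext. apply zero_l. Qed.
Lemma tzero_r a : tmul a tzero = tzero.
Proof. apply T_ext. apply zero_r. Qed.

Definition TT : InvSemigroup0 :=
  {| carrier := Tc; mul := tmul; inv := tinv; zero := tzero;
     mulA := tmulA; inv_l := tinv_l; inv_r := tinv_r; inv_uniq := tinv_uniq;
     zero_l := tzero_l; zero_r := tzero_r |}.

Lemma t_idem (a : TT) : @idempotent TT a <-> idem (tv a).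
Proof.
  unfold idempotent. split; intro H.
  - apply (f_equal tv) in H. exact H.
  - apply T_ext. exact H.
Qed.

Lemma t_le (a b : TT) : @nat_le TT a b <-> nat_le (tv a) (tv b).
Proof.
  split.
  - intros [e [He H]]. exists (tv e). split. apply t_idem; auto. apply (f_equal tv) in H. exact H.
  - intros H. exists (tmul (tinv a) a). split.
    + apply t_idem. apply idem_ll.
    + apply T_ext. apply nat_le_char in H. exact H.
Qed.

Lemma t_compat (a b : TT) : @compatible TT a b <-> compatible (tv a) (tv b).
Proof. unfold compatible. rewrite !t_idem. reflexivity. Qed.

Lemma t_lub_of_B (Q : TT -> Prop) (a b j : TT) : Q j -> is_join B (tv a) (tv b) (tv j) ->
  (forall k, Q k -> nat_le (tv a) (tv k) -> nat_le (tv b) (tv k) -> nat_le (tv j) (tv k)) ->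
  @is_lub_in TT Q a b j.
Proof.
  intros HQ [_ [H1 [H2 H3]]] H4. split; auto. rewrite !t_le. split; auto. split; auto.
  intros k Hk Ha Hb. rewrite t_le in *. auto.
Qed.

Definition tj (a b : TT) (H : compatible (tv a) (tv b)) : TT :=
  exist _ (jn (tv a) (tv b)) (Pjn _ _ (proj2_sig a) (proj2_sig b) H).

Lemma tj_lub (a b : TT) H : @is_lub_in TT anyS a b (tj a b H).
Proof.
  apply t_lub_of_B. exact I. apply jn_spec; auto. intros k _ H1 H2. apply jn_le; auto.
Qed.

Lemma t_lub_val (a b j : TT) : @is_lub_in TT anyS a b j -> compatible (tv a) (tv b) /\ tv j = jn (tv a) (tv b).
Proof.
  intro Hj. assert (Hc : compatible (tv a) (tv b)).
  { apply t_compat. destruct Hj as [_ [H1 [H2 _]]]. eapply compat_bounded; eauto. }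
  split; auto. rewrite (lub_unique TT _ _ _ _ _ Hj (tj_lub a b Hc)). reflexivity.
Qed.

Lemma tj_lub_idem (e f : TT) H : @idempotent TT e -> @idempotent TT f -> @is_lub_in TT idempotent e f (tj e f H).
Proof.
  intros He Hf. rewrite t_idem in He, Hf. apply t_lub_of_B.
  - apply t_idem. apply jn_idem; auto.
  - apply jn_spec; auto.
  - intros k _ H1 H2. apply jn_le; auto.
Qed.

Theorem TT_boolean : boolean_inverse_semigroup TT.
Proof.
  split; [|split].
  - intros a b Hc. rewrite t_compat in Hc. exists (tj a b Hc). apply tj_lub.
  - intros a b j s Hc Hj. destruct (t_lub_val a b j Hj) as [Hc' E].
    pose proof (proj1 (proj2 HB)) as HD. pose proof (jn_spec B HB _ _ Hc') as J. rewrite <- E in J.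
    destruct (HD _ _ _ (tv s) Hc' J) as [J1 J2]. split.
    + apply t_lub_of_B. exact I. exact J1. intros k _ H1 H2. destruct J1 as [_ [_ [_ J1]]]. apply J1; auto. exact I.
    + apply t_lub_of_B. exact I. exact J2. intros k _ H1 H2. destruct J2 as [_ [_ [_ J2]]]. apply J2; auto. exact I.
  - split; [|split; [|split; [|split]]].
    + intros e f He Hf. pose proof (idem_compat B _ _ (proj1 (t_idem e) He) (proj1 (t_idem f) Hf)) as Hc.
      exists (tj e f Hc). apply tj_lub_idem; auto.
    + intros e f He Hf. exists (tmul e f). apply (glb_idem_prod TT); auto.
    + split. apply (idem_zero TT). intros e _. apply (nat_le_zero TT).
    + intros e f g j m1 m2 x He Hf Hg Hj Hm1 Hm2 Hx.
      pose proof (idem_compat B _ _ (proj1 (t_idem f) Hf) (proj1 (t_idem g) Hg)) as Hc.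
      assert (Ej : j = tj f g Hc) by (eapply (lub_unique TT); eauto; apply tj_lub_idem; auto).
      assert (E1 : m1 = tmul e f) by (eapply (glb_unique TT); eauto; apply (glb_idem_prod TT); auto).
      assert (E2 : m2 = tmul e g) by (eapply (glb_unique TT); eauto; apply (glb_idem_prod TT); auto).
      assert (Hjj : @idempotent TT j) by (destruct Hj; auto).
      assert (Ex : x = tmul e j) by (eapply (glb_unique TT); eauto; apply (glb_idem_prod TT); auto).
      rewrite Ex, E1, E2. rewrite Ej. clear Ex E1 E2 Ej Hj Hx Hm1 Hm2 Hjj. apply t_idem in He. apply t_idem in Hf. apply t_idem in Hg.
      apply t_lub_of_B.
      * apply t_idem. simpl. unfold tv at 1. simpl. apply idem_prod_idem; auto. apply jn_idem; auto.
      * simpl. unfold tv; simpl. fold (tv e) (tv f) (tv g). rewrite jn_mul_l; auto.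
        apply jn_spec. apply idem_compat; apply idem_prod_idem; auto.
      * intros k _ H1 H2. simpl. unfold tv at 1; simpl. fold (tv e) (tv f) (tv g).
        rewrite jn_mul_l; auto. apply jn_le; auto. apply idem_compat; apply idem_prod_idem; auto.
    + intros e f He Hf Hfe. apply t_idem in He. apply t_idem in Hf. apply t_le in Hfe.
      set (g := exist P (dif (tv e) (tv f)) (Pdif _ _ (proj2_sig e) (proj2_sig f) He Hf) : TT).
      assert (Hg : idem (tv g)) by (apply dif_idem; auto).
      exists g. split. apply t_idem; auto. split. apply t_le. apply dif_le; auto. split.
      * assert (E : tmul f g = tzero).
        { apply T_ext. change (tv f ** dif (tv e) (tv f) = zero).
          rewrite (idem_commute B _ _ Hf (dif_idem B HB _ _ He Hf)). apply dif_kill; auto. }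
        change (is_glb_in TT idempotent f g tzero). rewrite <- E. apply (glb_idem_prod TT); apply t_idem; auto.
      * assert (Hfe' : tv e ** tv f = tv f).
        { symmetry. apply (idem_le_prod' B); auto. }
        apply t_lub_of_B.
        -- apply t_idem; auto.
        -- apply join_sym. rewrite <- Hfe' at 1. apply dif_join; auto.
        -- intros k _ H1 H2. rewrite <- (dif_jn B HB (tv e) (tv f)); auto. rewrite Hfe'.
           apply jn_le; auto. apply idem_compat; auto.
Qed.


Definition betaT (s : S) : TT := exist P (beta s) (Pbeta s).

Lemma betaT_hom : homomorphism S TT betaT.
Proof.
  pose proof (proj1 (proj1 (proj2 Hbool))) as Hm. pose proof (proj2 (proj1 (proj2 Hbool))) as Hz. split.
  - intros a b. apply T_ext. simpl. apply Hm.
  - apply T_ext. simpl. apply Hz.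
Qed.

Lemma morph_comp_tv (g : B -> TT) : morphism B TT g -> morphism B B (fun y => tv (g y)).
Proof.
  intros [[Hm Hz] Hj]. split. split.
  - intros a b. rewrite Hm. reflexivity.
  - rewrite Hz. reflexivity.
  - intros a b j Hc Hl. pose proof (Hj a b j Hc Hl) as H. destruct (t_lub_val _ _ _ H) as [Hc' E].
    rewrite E. apply jn_spec; auto.
Qed.

Lemma morph_id : morphism B B (fun y => y).
Proof. split. split; auto. auto. Qed.

Theorem gen_principle : forall x, P x.
Proof.
  pose proof Hbool as [HB' [Hh [Hinj U]]].
  destruct (U TT betaT TT_boolean betaT_hom) as [[g [Hg Eg]] _].
  destruct (U B beta HB' Hh) as [_ Uniq].
  intro x. assert (E : tv (g x) = x).
  { apply (Uniq (fun y => tv (g y)) (fun y => y) (morph_comp_tv g Hg) morph_id).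
    - intros s. rewrite <- Eg. reflexivity.
    - auto. }
  rewrite <- E. exact (proj2_sig (g x)).
Qed.

End Gen.


Section Gener.
Variables (S B : InvSemigroup0) (beta : S -> B).
Hypothesis Hbool : is_booleanization S B beta.
Let HB : boolean_inverse_semigroup B := proj1 Hbool.
Let Hh : homomorphism S B beta := proj1 (proj2 Hbool).
Local Notation "x ** y" := (@mul B x y) (at level 40, left associativity).
Local Notation "x ^-" := (@inv B x) (at level 2).
Local Notation idem := (@idempotent B).
Local Notation jn := (jn B HB).
Local Notation dif := (dif B HB).
Local Notation jl := (jl B HB).
Local Notation "x <= y" := (@nat_le B x y).
Ltac ra := repeat rewrite <- mulA.

Definition conjS (c k : S) : S := mul (mul (inv c) k) c.

Definition allidemS (ks : list S) := forall k, In k ks -> @idempotent S k.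

Definition basx (x : B) (ks : list S) : B := fold_left (fun acc k => dif acc (beta k)) ks x.
Definition bas (e : S) (ks : list S) : B := basx (beta e) ks.

Lemma bidem (e : S) : @idempotent S e -> idem (beta e).
Proof. apply hom_idem; auto. Qed.
Lemma bmul (a b : S) : beta (mul a b) = beta a ** beta b.
Proof. apply (hom_mul _ _ _ Hh). Qed.
Lemma binv (a : S) : beta (inv a) = (beta a) ^-.
Proof. apply (hom_inv _ _ _ Hh). Qed.

Lemma allidemS_cons k ks : allidemS (k :: ks) <-> @idempotent S k /\ allidemS ks.
Proof. unfold allidemS. simpl. split. intro H; split; auto. intros [H1 H2] x [<-|Hx]; auto. Qed.
Lemma allidemS_app ks ks' : allidemS (ks ++ ks') <-> allidemS ks /\ allidemS ks'.
Proof.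
  unfold allidemS. split. intro H; split; intros; apply H; apply in_or_app; auto.
  intros [H1 H2] x Hx. apply in_app_or in Hx. destruct Hx; auto.
Qed.

Lemma basx_cons x k ks : basx x (k :: ks) = basx (dif x (beta k)) ks.
Proof. reflexivity. Qed.
Lemma basx_nil x : basx x [] = x.
Proof. reflexivity. Qed.
Lemma basx_app x ks ks' : basx x (ks ++ ks') = basx (basx x ks) ks'.
Proof. unfold basx. apply fold_left_app. Qed.

Lemma basx_idem x ks : idem x -> allidemS ks -> idem (basx x ks).
Proof.
  revert x. induction ks as [|k ks IH]; intros x Hx Hks; auto.
  apply allidemS_cons in Hks. destruct Hks. rewrite basx_cons. apply IH; auto.
  apply dif_idem; auto. apply bidem; auto.
Qed.

Lemma basx_le x ks : idem x -> allidemS ks -> basx x ks <= x.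
Proof.
  revert x. induction ks as [|k ks IH]; intros x Hx Hks. apply nat_le_refl.
  apply allidemS_cons in Hks. destruct Hks. rewrite basx_cons. eapply nat_le_trans. apply IH; auto.
  apply dif_idem; auto. apply bidem; auto. apply dif_le; auto. apply bidem; auto.
Qed.

Lemma basx_mul_r x ks y : idem x -> idem y -> allidemS ks -> basx x ks ** y = basx (x ** y) ks.
Proof.
  revert x. induction ks as [|k ks IH]; intros x Hx Hy Hks; auto.
  apply allidemS_cons in Hks. destruct Hks. rewrite !basx_cons. rewrite IH; auto.
  rewrite dif_mul_r; auto. apply bidem; auto. apply dif_idem; auto. apply bidem; auto.
Qed.

Lemma basx_conj x ks (c : S) : idem x -> allidemS ks ->
  (beta c) ^- ** basx x ks ** beta c = basx ((beta c) ^- ** x ** beta c) (map (conjS c) ks).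
Proof.
  revert x. induction ks as [|k ks IH]; intros x Hx Hks; auto.
  apply allidemS_cons in Hks. destruct Hks. simpl map. rewrite !basx_cons. rewrite IH; auto.
  rewrite dif_conj; auto. unfold conjS. rewrite !bmul, binv. auto. apply bidem; auto.
  apply dif_idem; auto. apply bidem; auto.
Qed.

Lemma bas_idem e ks : @idempotent S e -> allidemS ks -> idem (bas e ks).
Proof. intros. apply basx_idem; auto. apply bidem; auto. Qed.
Lemma bas_le e ks : @idempotent S e -> allidemS ks -> bas e ks <= beta e.
Proof. intros. apply basx_le; auto. apply bidem; auto. Qed.

Lemma bas_mul e ks e' ks' : @idempotent S e -> allidemS ks -> @idempotent S e' -> allidemS ks' ->
  bas e ks ** bas e' ks' = bas (mul e' e) (ks' ++ ks).
Proof.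
  intros He Hks He' Hks'. unfold bas. rewrite basx_mul_r; auto. 2: apply bidem; auto.
  2: apply bas_idem; auto.
  rewrite (idem_commute B (beta e) (basx (beta e') ks')); [|apply bidem; auto|apply bas_idem; auto].
  rewrite basx_mul_r; auto; try apply bidem; auto. rewrite <- bmul.
  rewrite basx_app. auto.
Qed.

Lemma idem_shift (t b : B) : idem b -> b ** t = t ** (t ^- ** b ** t).
Proof.
  intro Hb. ra. rewrite (mulA t (t ^-) (b ** t)). rewrite (mulA (t ** t ^-) b t).
  rewrite (idem_commute B (t ** t ^-) b); [|apply idem_rr|auto]. ra. rewrite inv_l'. auto.
Qed.

Lemma bas_conj (c e : S) ks : @idempotent S e -> allidemS ks ->
  (beta c) ^- ** bas e ks ** beta c = bas (conjS c e) (map (conjS c) ks).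
Proof.
  intros He Hks. unfold bas. rewrite basx_conj; auto. unfold conjS. rewrite !bmul, binv. auto. apply bidem; auto.
Qed.

Lemma allidemS_conj (c : S) ks : allidemS ks -> allidemS (map (conjS c) ks).
Proof.
  intros H k Hk. apply in_map_iff in Hk. destruct Hk as [k' [<- Hk']]. apply idem_conj'. auto.
Qed.

Definition good (p : B) := exists c e ks, @idempotent S e /\ allidemS ks /\ p = beta c ** bas e ks.

Lemma good_mul p q : good p -> good q -> good (p ** q).
Proof.
  intros [c [e [ks [He [Hks ->]]]]] [c' [e' [ks' [He' [Hks' ->]]]]].
  exists (mul c c'), (mul e' (conjS c' e)), (ks' ++ map (conjS c') ks).
  split. apply idem_prod_idem; auto. apply idem_conj'; auto. split.
  apply allidemS_app. split; auto. apply allidemS_conj; auto.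
  rewrite <- bas_mul; auto. 2: apply idem_conj'; auto. 2: apply allidemS_conj; auto.
  rewrite <- bas_conj; auto. rewrite bmul. ra. f_equal. rewrite !mulA. f_equal.
  rewrite (idem_shift (beta c') (bas e ks)) by (apply bas_idem; auto). ra. auto.
Qed.

Lemma good_inv p : good p -> good (p ^-).
Proof.
  intros [c [e [ks [He [Hks ->]]]]].
  exists (inv c), (conjS (inv c) e), (map (conjS (inv c)) ks).
  split. apply idem_conj'; auto. split. apply allidemS_conj; auto.
  rewrite <- bas_conj; auto. rewrite inv_mul, (idem_inv B _ (bas_idem e ks He Hks)).
  rewrite binv. rewrite (idem_shift ((beta c) ^-) (bas e ks)) at 1 by (apply bas_idem; auto). ra. auto.
Qed.

Lemma good_beta s : good (beta s).
Proof.
  exists s, (mul (inv s) s), []. split. apply idem_ll. split. intros ? [].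
  unfold bas. rewrite basx_nil. rewrite <- bmul. rewrite inv_l'. auto.
Qed.

Lemma good_le p : good p -> exists c, p <= beta c.
Proof.
  intros [c [e [ks [He [Hks ->]]]]]. exists c. apply nat_le_idem_r. apply bas_idem; auto.
Qed.


Definition Pg (x : B) := exists L, (forall p, In p L -> good p) /\ bounded B L x /\ x = jl L.
Definition goodI (p : B) := exists e ks, @idempotent S e /\ allidemS ks /\ p = bas e ks.
Definition PI (x : B) := exists L, (forall p, In p L -> goodI p) /\ x = jl L.

Lemma goodI_idem p : goodI p -> idem p.
Proof. intros [e [ks [He [Hks ->]]]]. apply bas_idem; auto. Qed.
Lemma allidem_goodI L : (forall p, In p L -> goodI p) -> allidem B L.
Proof. intros H p Hp. apply goodI_idem; auto. Qed.
Lemma PI_idem x : PI x -> idem x.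
Proof. intros [L [HL ->]]. apply (proj1 (jl_idem B HB L (allidem_goodI L HL))). Qed.
Lemma PI_bounded L : (forall p, In p L -> goodI p) -> bounded B L (jl L).
Proof. intros H. exact (proj1 (proj2 (jl_idem B HB L (allidem_goodI L H)))). Qed.

Lemma goodI_good p : goodI p -> good p.
Proof.
  intros [e [ks [He [Hks ->]]]]. exists e, e, ks. split; auto. split; auto.
  apply (idem_le_prod' B). apply bidem; auto. apply bas_le; auto.
Qed.

Lemma jl_single p : jl [p] = p.
Proof. simpl. apply jn_zero_r. Qed.

Lemma jl_concat LL w : (forall L, In L LL -> bounded B L w) -> jl (concat LL) = jl (map jl LL).
Proof.
  induction LL as [|L LL IH]; intros H; auto. simpl.
  rewrite (jl_app B HB L (concat LL) w). rewrite IH; auto. intros; apply H; right; auto.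
  apply bounded_app. split. apply H; left; auto.
  intros q Hq. apply in_concat in Hq. destruct Hq as [M [HM Hq]]. apply (H M); auto. right; auto.
Qed.

Definition prodlist (L M : list B) := concat (map (fun p => map (mul p) M) L).

Lemma prodlist_in L M q : In q (prodlist L M) -> exists p r, In p L /\ In r M /\ q = p ** r.
Proof.
  unfold prodlist. intro H. apply in_concat in H. destruct H as [N [HN Hq]].
  apply in_map_iff in HN. destruct HN as [p [<- Hp]]. apply in_map_iff in Hq.
  destruct Hq as [r [<- Hr]]. exists p, r. auto.
Qed.

Lemma bounded_prodlist L M w w' : bounded B L w -> bounded B M w' -> bounded B (prodlist L M) (w ** w').
Proof.
  intros H1 H2 q Hq. apply prodlist_in in Hq. destruct Hq as [p [r [Hp [Hr ->]]]].
  apply nat_le_mul; auto.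
Qed.

Lemma jl_prod L M w w' : bounded B L w -> bounded B M w' -> jl L ** jl M = jl (prodlist L M).
Proof.
  intros H1 H2. rewrite (jl_mul_r B HB (jl M) L w H1).
  rewrite map_ext_in with (g := fun p => jl (map (mul p) M)).
  2: { intros p Hp. apply (jl_mul_l B HB p M w' H2). }
  unfold prodlist. rewrite (jl_concat _ (w ** w')).
  - rewrite map_map. auto.
  - intros N HN. apply in_map_iff in HN. destruct HN as [p [<- Hp]].
    apply (bounded_map_mul_l B p M w') in H2. eapply bounded_trans; eauto. apply nat_le_mul_r; auto.
Qed.

Lemma Pg_beta s : Pg (beta s).
Proof.
  exists [beta s]. split. intros p [<-|[]]. apply good_beta. split.
  intros p [<-|[]]. apply nat_le_refl. symmetry; apply jl_single.
Qed.

Lemma Pg_zero : Pg zero.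
Proof. exists []. split. intros ? []. split. intros ? []. reflexivity. Qed.

Lemma Pg_mul x y : Pg x -> Pg y -> Pg (x ** y).
Proof.
  intros [L [HL [Hb ->]]] [M [HM [Hb' ->]]]. exists (prodlist L M). split; [|split].
  - intros q Hq. apply prodlist_in in Hq. destruct Hq as [p [r [Hp [Hr ->]]]]. apply good_mul; auto.
  - apply bounded_prodlist; auto.
  - apply jl_prod with (jl L) (jl M); auto.
Qed.

Lemma Pg_inv x : Pg x -> Pg (x ^-).
Proof.
  intros [L [HL [Hb ->]]]. exists (map inv L). split; [|split].
  - intros q Hq. apply in_map_iff in Hq. destruct Hq as [p [<- Hp]]. apply good_inv; auto.
  - apply bounded_map_inv; auto.
  - apply (jl_inv B HB L (jl L)); auto.
Qed.

Lemma Pg_jn x y : Pg x -> Pg y -> compatible x y -> Pg (jn x y).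
Proof.
  intros [L [HL [Hb Ex]]] [M [HM [Hb' Ey]]] Hc. exists (L ++ M).
  assert (Hbb : bounded B (L ++ M) (jn x y)).
  { apply bounded_app. split.
    - eapply bounded_trans; eauto. apply le_jn_l; auto.
    - eapply bounded_trans; eauto. apply le_jn_r; auto. }
  split; [|split]; auto.
  - intros p Hp. apply in_app_or in Hp. destruct Hp; auto.
  - rewrite (jl_app B HB L M (jn x y)); auto. rewrite <- Ex, <- Ey. auto.
Qed.

Lemma PI_goodI p : goodI p -> PI p.
Proof. intro H. exists [p]. split. intros q [<-|[]]; auto. symmetry; apply jl_single. Qed.

Lemma PI_beta_idem e : @idempotent S e -> PI (beta e).
Proof. intro He. apply PI_goodI. exists e, []. split; auto. split; auto. intros ? []. Qed.

Lemma PI_mul x y : PI x -> PI y -> PI (x ** y).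
Proof.
  intros [L [HL ->]] [M [HM ->]]. exists (prodlist L M). split.
  - intros q Hq. apply prodlist_in in Hq. destruct Hq as [p [r [Hp [Hr ->]]]].
    destruct (HL p Hp) as [e [ks [He [Hks ->]]]]. destruct (HM r Hr) as [e' [ks' [He' [Hks' ->]]]].
    exists (mul e' e), (ks' ++ ks). split. apply idem_prod_idem; auto. split.
    apply allidemS_app; auto. apply bas_mul; auto.
  - apply jl_prod with (jl L) (jl M); apply PI_bounded; auto.
Qed.

Lemma PI_jn x y : PI x -> PI y -> PI (jn x y).
Proof.
  intros [L [HL Ex]] [M [HM Ey]]. exists (L ++ M). split.
  - intros p Hp. apply in_app_or in Hp. destruct Hp; auto.
  - assert (Hx : idem x) by (apply PI_idem; exists L; auto).
    assert (Hy : idem y) by (apply PI_idem; exists M; auto).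
    rewrite (jl_app B HB L M (jn x y)). rewrite <- Ex, <- Ey. auto.
    apply bounded_app. split.
    + eapply bounded_trans. apply PI_bounded; auto. rewrite <- Ex. apply le_jn_l. apply idem_compat; auto.
    + eapply bounded_trans. apply PI_bounded; auto. rewrite <- Ey. apply le_jn_r. apply idem_compat; auto.
Qed.

Lemma dif_zero_l z : idem z -> dif zero z = zero.
Proof.
  intro Hz. symmetry. apply dif_unique; auto. apply idem_zero. split. apply idem_zero.
  split. apply nat_le_refl. split. apply zero_l. rewrite zero_l. apply join_of_le. apply nat_le_refl.
Qed.

Lemma dif_jl_l L z : allidem B L -> idem z -> dif (jl L) z = jl (map (fun p => dif p z) L).
Proof.
  induction L as [|p L IH]; intros HL Hz.
  - apply dif_zero_l; auto.
  - simpl. assert (Hp : idem p) by (apply HL; left; auto).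
    assert (HL' : allidem B L) by (intros q Hq; apply HL; right; auto).
    rewrite dif_jn_l; auto. rewrite IH; auto. apply (proj1 (jl_idem B HB L HL')).
Qed.

Lemma PI_dif_beta x e : PI x -> @idempotent S e -> PI (dif x (beta e)).
Proof.
  intros [L [HL ->]] He. exists (map (fun p => dif p (beta e)) L). split.
  - intros q Hq. apply in_map_iff in Hq. destruct Hq as [p [<- Hp]].
    destruct (HL p Hp) as [e' [ks [He' [Hks ->]]]]. exists e', (ks ++ [e]). split; auto. split.
    apply allidemS_app. split; auto. intros ? [<-|[]]; auto.
    unfold bas. rewrite basx_app. reflexivity.
  - apply dif_jl_l. apply allidem_goodI; auto. apply bidem; auto.
Qed.

Lemma PI_dif_bas ks : allidemS ks -> forall e, @idempotent S e -> forall x, PI x -> PI (dif x (bas e ks)).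
Proof.
  induction ks as [|k ks IH] using rev_ind; intros Hks e He x Hx.
  - apply PI_dif_beta; auto.
  - apply allidemS_app in Hks. destruct Hks as [Hks Hk]. assert (Hk' : @idempotent S k) by (apply Hk; left; auto).
    unfold bas. rewrite basx_app. simpl. fold (bas e ks).
    rewrite dif_dif_r; auto. 2: apply PI_idem; auto. 2: apply bas_idem; auto. 2: apply bidem; auto.
    apply PI_jn. apply IH; auto. apply PI_mul. apply PI_mul; auto. apply PI_goodI. exists e, ks. auto.
    apply PI_beta_idem; auto.
Qed.

Lemma PI_dif z x : PI z -> PI x -> PI (dif x z).
Proof.
  intros [M [HM ->]]. revert x. induction M as [|q M IH]; intros x Hx.
  - simpl. rewrite dif_zero_r; auto. apply PI_idem; auto.
  - simpl. assert (Hq : goodI q) by (apply HM; left; auto).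
    assert (HM' : forall p, In p M -> goodI p) by (intros; apply HM; right; auto).
    rewrite dif_jn_r; auto. 2: apply PI_idem; auto. 2: apply goodI_idem; auto.
    2: apply (proj1 (jl_idem B HB M (allidem_goodI M HM'))).
    apply IH; auto. destruct Hq as [e [ks [He [Hks ->]]]]. apply PI_dif_bas; auto.
Qed.

Lemma Pg_PI x : PI x -> Pg x.
Proof.
  intros [L [HL Ex]]. exists L. split. intros p Hp. apply goodI_good; auto. split; auto.
  rewrite Ex. apply PI_bounded; auto.
Qed.

Lemma good_idem_goodI p : good p -> idem p -> goodI p.
Proof.
  intros [c [e [ks [He [Hks ->]]]]] Hp. exists (mul e (mul (inv c) c)), ks.
  split. apply idem_prod_idem; auto. apply idem_ll. split; auto.
  apply idem_iff_inv in Hp. rewrite Hp. rewrite inv_mul, (idem_inv B _ (bas_idem e ks He Hks)).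
  ra. rewrite (mulA ((beta c) ^-) (beta c) (bas e ks)).
  rewrite (idem_commute B ((beta c) ^- ** beta c) (bas e ks)); [|apply idem_ll|apply bas_idem; auto].
  rewrite (idem2 B (bas e ks)); [|apply bas_idem; auto].
  unfold bas. rewrite basx_mul_r; auto. rewrite !bmul, binv. auto. apply bidem; auto. apply idem_ll.
Qed.

Lemma Pg_idem_PI x : Pg x -> idem x -> PI x.
Proof.
  intros [L [HL [Hb Ex]]] Hx. exists L. split; auto. intros p Hp. apply good_idem_goodI; auto.
  apply (nat_le_idem B p x Hx). apply Hb; auto.
Qed.

Lemma Pg_dif x k : Pg x -> Pg k -> idem x -> idem k -> Pg (dif x k).
Proof.
  intros H1 H2 Hx Hk. apply Pg_PI. apply PI_dif; apply Pg_idem_PI; auto.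
Qed.

Theorem all_Pg : forall x, Pg x.
Proof.
  apply (gen_principle S B beta Hbool Pg Pg_beta Pg_zero Pg_mul Pg_inv Pg_jn Pg_dif).
Qed.

Theorem idem_NF x : idem x -> PI x.
Proof. intro Hx. apply Pg_idem_PI; auto. apply all_Pg. Qed.

End Gener.


Section Meets.
Variable B : InvSemigroup0.
Hypothesis HB : boolean_inverse_semigroup B.
Local Notation "x ** y" := (@mul B x y) (at level 40, left associativity).
Local Notation "x ^-" := (@inv B x) (at level 2).
Local Notation "x <= y" := (@nat_le B x y).
Local Notation jn := (jn B HB).
Local Notation jl := (jl B HB).
Local Notation glb := (is_glb_in B anyS).
Implicit Types a b c e f j k s x y z w g p q r u m : B.

Lemma glb_sym u w m : glb u w m -> glb w u m.
Proof. intros [A [C [D E]]]. refine (conj A (conj D (conj C _))). intros k Hk H1 H2. apply E; auto. Qed.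

Lemma meet_down u w m u' : glb u w m -> u' <= u -> glb u' w (m ** (u' ^- ** u')).
Proof.
  intros [_ [Hmu [Hmw Hg]]] Hu. split. exact I. split; [|split].
  - pose proof Hu as Hu'. apply nat_le_char in Hu'. apply nat_le_trans with (u ** (u' ^- ** u')).
    apply nat_le_mul_r; auto. rewrite <- Hu'. apply nat_le_refl.
  - eapply nat_le_trans. apply nat_le_idem_r, idem_ll. auto.
  - intros z _ H1 H2. assert (Hzm : z <= m) by (apply Hg; [exact I| apply nat_le_trans with u'; auto | auto]).
    apply nat_le_char in Hzm. apply nat_le_ll in H1.
    apply (nat_le_idem_char B) in H1; [|apply idem_ll]. destruct H1 as [_ H1].
    exists (z ^- ** z). split. apply idem_ll.
    rewrite Hzm at 1. rewrite H1 at 1. rewrite mulA.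
    rewrite <- (mulA m). rewrite (idem_commute B (z ^- ** z) (u' ^- ** u')); try apply idem_ll.
    rewrite mulA. auto.
Qed.

Lemma meet_jn u1 u2 w m1 m2 : compatible u1 u2 -> glb u1 w m1 -> glb u2 w m2 -> glb (jn u1 u2) w (jn m1 m2).
Proof.
  intros Hc [_ [H1u [H1w H1g]]] [_ [H2u [H2w H2g]]].
  assert (Hc' : compatible m1 m2) by (apply compat_bounded with w; auto).
  split. exact I. split; [|split].
  - apply jn_le; auto. apply nat_le_trans with u1; auto. apply le_jn_l; auto.
    apply nat_le_trans with u2; auto. apply le_jn_r; auto.
  - apply jn_le; auto.
  - intros z _ Hz1 Hz2. pose proof Hz1 as E. apply nat_le_char in E. rewrite E.
    rewrite jn_mul_r; auto. apply jn_le.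
    + apply compat_mul_r; auto.
    + eapply nat_le_trans; [|apply le_jn_l; auto]. apply H1g. exact I. apply nat_le_idem_r, idem_ll.
      apply nat_le_trans with z; auto. apply nat_le_trans with (jn u1 u2 ** (z ^- ** z)).
      apply nat_le_mul_r, le_jn_l; auto. rewrite <- E; apply nat_le_refl.
    + eapply nat_le_trans; [|apply le_jn_r; auto]. apply H2g. exact I. apply nat_le_idem_r, idem_ll.
      apply nat_le_trans with z; auto. apply nat_le_trans with (jn u1 u2 ** (z ^- ** z)).
      apply nat_le_mul_r, le_jn_r; auto. rewrite <- E; apply nat_le_refl.
Qed.

Lemma meet_zero w : glb zero w zero.
Proof.
  split. exact I. split. apply nat_le_refl. split. apply nat_le_zero. intros k _ H _. auto.
Qed.

Lemma meet_jl L b0 w : bounded B L b0 -> (forall p, In p L -> exists m, glb p w m) -> exists m, glb (jl L) w m.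
Proof.
  induction L as [|p L IH]; intros Hb H.
  - exists zero. apply meet_zero.
  - apply bounded_cons in Hb. destruct Hb as [Hp Hb].
    destruct (IH Hb) as [m2 Hm2]. intros q Hq; apply H; right; auto.
    destruct (H p (or_introl eq_refl)) as [m1 Hm1].
    exists (jn m1 m2). simpl. apply meet_jn; auto. apply compat_bounded with b0; auto. apply jl_le; auto.
Qed.

End Meets.

Section Points.
Variables (S B : InvSemigroup0) (beta : S -> B).
Hypothesis Hbool : is_booleanization S B beta.
Local Notation HB := (proj1 Hbool).
Local Notation Hh := (proj1 (proj2 Hbool)).
Variable gam : B -> PBt S.
Hypothesis Hg : morphism B (PB S) gam.
Hypothesis Eg : forall s, th S s = gam (beta s).
Local Notation "x ** y" := (@mul B x y) (at level 40, left associativity).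
Local Notation "x ^-" := (@inv B x) (at level 2).
Local Notation "x <= y" := (@nat_le B x y).
Local Notation idem := (@idempotent B).
Local Notation jn := (jn B HB).
Local Notation jl := (jl B HB).
Local Notation dif := (dif B HB).
Local Notation val := (@proj1_sig S (fun x => x <> zero)).
Implicit Types u v w : X S.

Lemma gam_hom : homomorphism B (PB S) gam.
Proof. apply Hg. Qed.

Lemma gam_le x y u v : x <= y -> gam x u v -> gam y u v.
Proof.
  intros H. apply (hom_le _ _ _ gam_hom) in H. rewrite pb_le_iff in H. apply H.
Qed.

Lemma gam_zero u v : gam zero u v -> False.
Proof. rewrite (hom_zero _ _ _ gam_hom). simpl. auto. Qed.

Lemma gam_mul x y u v : gam (x ** y) u v <-> exists w, gam y u w /\ gam x w v.
Proof. rewrite (hom_mul _ _ _ gam_hom). reflexivity. Qed.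

Lemma gam_beta s u v : gam (beta s) u v <-> th_rel S s u v.
Proof. rewrite <- Eg. reflexivity. Qed.

Lemma gam_idem x u v : idem x -> gam x u v -> u = v.
Proof.
  intros Hx. apply (hom_idem _ _ _ gam_hom) in Hx. rewrite pb_idem_iff in Hx. apply Hx.
Qed.

Lemma gam_jn a b u v : compatible a b -> (gam (jn a b) u v <-> gam a u v \/ gam b u v).
Proof.
  intro Hc. destruct Hg as [_ Hj]. pose proof (Hj a b (jn a b) Hc (jn_spec B HB a b Hc)) as L.
  assert (Hc' : @compatible (PB S) (gam a) (gam b)).
  { destruct L as [_ [L1 [L2 _]]]. eapply compat_bounded; eauto. }
  rewrite (pb_lub_iff S (gam a) (gam b) (gam (jn a b)) Hc') in L. apply L.
Qed.

Lemma gam_jl L b0 u v : bounded B L b0 -> (gam (jl L) u v <-> exists p, In p L /\ gam p u v).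
Proof.
  induction L as [|p L IH]; intros Hb.
  - simpl. split. intro H; exfalso; eapply gam_zero; eauto. intros [? [[] _]].
  - apply bounded_cons in Hb. destruct Hb as [Hp Hb]. simpl.
    rewrite gam_jn. rewrite IH; auto. split.
    + intros [H|[q [Hq H]]]. exists p; auto. exists q; auto.
    + intros [q [[<-|Hq] H]]; auto. right; exists q; auto.
    + apply compat_bounded with b0; auto. apply jl_le; auto.
Qed.

Lemma gam_dif x k u v : idem x -> idem k -> (gam (dif x k) u v <-> gam x u v /\ ~ gam (x ** k) u v).
Proof.
  intros Hx Hk. split.
  - intro H. split. eapply gam_le; eauto. apply dif_le; auto.
    intro H2. pose proof (gam_idem _ _ _ (dif_idem B HB x k Hx Hk) H). subst v.
    apply (gam_zero u u). rewrite <- (dif_kill B HB x k Hx Hk).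
    rewrite (idem_le_prod B (dif x k) x Hx (dif_le B HB x k Hx Hk)). rewrite <- mulA.
    apply gam_mul. exists u. split; auto.
  - intros [H1 H2]. rewrite <- (dif_jn B HB x k Hx Hk) in H1. rewrite gam_jn in H1.
    destruct H1; auto. contradiction. apply idem_compat; auto. apply dif_idem; auto.
    apply idem_prod_idem; auto.
Qed.

Lemma th_idem_rel (k : S) u w : @idempotent S k -> (th_rel S k u w <-> mul k (val u) = val u /\ w = u).
Proof.
  intro Hk. unfold th_rel. rewrite (idem_inv S k Hk). unfold idempotent in Hk. rewrite Hk. split.
  - intros [H1 H2]. split; auto. apply X_eq. congruence.
  - intros [H1 ->]. auto.
Qed.

Lemma gam_basx x ks u v : idem x -> allidemS S ks ->
  (gam (basx S B beta Hbool x ks) u v <-> gam x u v /\ forall k, In k ks -> mul k (val u) <> val u).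
Proof.
  revert x. induction ks as [|k ks IH]; intros x Hx Hks.
  - simpl. split. intros H; split; auto; intros ? []. intros [H _]; exact H.
  - apply allidemS_cons in Hks. destruct Hks as [Hk Hks]. rewrite basx_cons. rewrite IH; auto.
    2: apply dif_idem; auto; apply bidem; auto.
    rewrite gam_dif; auto. 2: apply bidem; auto. rewrite gam_mul.
    assert (E : (exists w, gam (beta k) u w /\ gam x w v) <-> mul k (val u) = val u /\ gam x u v).
    { split.
      - intros [w [H1 H2]]. rewrite gam_beta, th_idem_rel in H1; auto. destruct H1 as [H1 ->]. auto.
      - intros [H1 H2]. exists u. split; auto. rewrite gam_beta, th_idem_rel; auto. }
    rewrite E. split.
    + intros [[H1 H2] H3]. split; auto. intros k' [<-|Hk']; auto.
    + intros [H1 H2]. split; [split|]; auto.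
      * intros [H3 _]. apply (H2 k); auto. left; auto.
      * intros k' Hk'. apply H2. right; auto.
Qed.

Lemma gam_bas e ks u v : @idempotent S e -> allidemS S ks ->
  (gam (bas S B beta Hbool e ks) u v <-> (u = v /\ mul e (val u) = val u) /\ forall k, In k ks -> mul k (val u) <> val u).
Proof.
  intros He Hks. unfold bas. rewrite gam_basx; auto. 2: apply bidem; auto.
  rewrite gam_beta, th_idem_rel; auto. split; intros [[A B1] C]; repeat split; auto.
Qed.

End Points.


Section Main.
Variables (S B : InvSemigroup0) (beta : S -> B).
Hypothesis Hbool : is_booleanization S B beta.
Local Notation HB := (proj1 Hbool).
Local Notation Hh := (proj1 (proj2 Hbool)).
Variable gam : B -> PBt S.
Hypothesis Hg : morphism B (PB S) gam.
Hypothesis Eg : forall s, th S s = gam (beta s).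
Local Notation "x ** y" := (@mul B x y) (at level 40, left associativity).
Local Notation "x ^-" := (@inv B x) (at level 2).
Local Notation "x <= y" := (@nat_le B x y).
Local Notation idem := (@idempotent B).
Local Notation jn := (jn B HB).
Local Notation jl := (jl B HB).
Local Notation dif := (dif B HB).
Local Notation bas := (bas S B beta Hbool).
Local Notation basx := (basx S B beta Hbool).
Local Notation val := (@proj1_sig S (fun x => x <> zero)).
Local Notation bmul := (bmul S B beta Hbool).
Local Notation binv := (binv S B beta Hbool).
Local Notation bidem := (bidem S B beta Hbool).
Local Notation bas_le := (bas_le S B beta Hbool).
Local Notation bas_idem := (bas_idem S B beta Hbool).
Local Notation gam_bas := (gam_bas S B beta Hbool gam Hg Eg).
Local Notation gam_le := (gam_le S B gam Hg).
Local Notation gam_mul := (gam_mul S B gam Hg).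
Local Notation gam_beta := (gam_beta S B beta gam Eg).
Local Notation gam_idem := (gam_idem S B gam Hg).
Local Notation gam_jl := (gam_jl S B beta Hbool gam Hg).
Local Notation th_idem_rel := (th_idem_rel S).

Definition PG (e : S) (ks : list S) := e <> zero /\ forall k, In k ks -> mul k e <> e.

Lemma S_le_zero (s : S) : nat_le s zero -> s = zero.
Proof. intros [e [_ ->]]. apply zero_l. Qed.
Lemma B_le_zero (x : B) : x <= zero -> x = zero.
Proof. intros [e [_ ->]]. apply zero_l. Qed.

Lemma ll_nonzero (s : S) : s <> zero -> mul (inv s) s <> zero.
Proof. intros H E. apply H. rewrite <- (inv_l' S s), E. apply zero_r. Qed.

Lemma mul_nonzero (a e : S) : e <> zero -> mul (mul (inv a) a) e = e -> mul a e <> zero.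
Proof. intros H E E2. apply H. rewrite <- E, <- mulA, E2. apply zero_r. Qed.

Lemma PG_of_point e ks (u : X S) : mul e (val u) = val u -> (forall k, In k ks -> mul k (val u) <> val u) -> PG e ks.
Proof.
  intros H1 H2. split.
  - intro E. destruct u as [u nu]. simpl in *. subst. rewrite zero_l in H1. auto.
  - intros k Hk E. apply (H2 k Hk). rewrite <- H1, mulA, E. auto.
Qed.

Lemma basx_kill x ks k : idem x -> allidemS S ks -> In k ks -> basx x ks ** beta k = zero.
Proof.
  revert x. induction ks as [|k' ks IH]; intros x Hx Hks Hk; [destruct Hk|].
  apply allidemS_cons in Hks. destruct Hks as [Hk' Hks]. rewrite basx_cons.
  assert (Hd : idem (dif x (beta k'))) by (apply dif_idem; auto; apply bidem; auto).
  destruct Hk as [->|Hk]; [|apply IH; auto].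
  rewrite (idem_le_prod B (basx _ ks) (dif x (beta k)) Hd). 2: apply basx_le; auto.
  rewrite <- mulA, dif_kill; auto. apply zero_r. apply bidem; auto.
Qed.

Lemma bas_zero e ks : @idempotent S e -> allidemS S ks -> ~ PG e ks -> bas e ks = zero.
Proof.
  intros He Hks HP. unfold PG in HP. apply not_and_or in HP. destruct HP as [HP|HP].
  - apply NNPP in HP. subst e. apply B_le_zero. rewrite <- (hom_zero _ _ _ Hh). apply bas_le; auto.
  - apply not_all_ex_not in HP. destruct HP as [k HP]. apply imply_to_and in HP. destruct HP as [Hk HP].
    apply NNPP in HP.
    rewrite (idem_le_prod B (bas e ks) (beta e)). 2: apply bidem; auto. 2: apply bas_le; auto.
    rewrite <- HP at 2. rewrite bmul, mulA. unfold bas at 1. rewrite basx_kill; auto. apply zero_l.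
    apply bidem; auto.
Qed.

Lemma goodI_le_jl L p : (forall q, In q L -> goodI S B beta Hbool q) -> In p L -> p <= jl L.
Proof. intros HL Hp. apply (PI_bounded S B beta Hbool L HL). auto. Qed.

Lemma dirA : wedge_semigroup B -> weak_semilattice S.
Proof.
  intros Hw a b. destruct (Hw (beta a) (beta b)) as [m [_ [Hma [Hmb Hmg]]]].
  set (g := m ^- ** m). assert (Hgi : idem g) by apply idem_ll.
  assert (Ea : m = beta a ** g) by (apply nat_le_char; auto).
  assert (Eb : m = beta b ** g) by (apply nat_le_char; auto).
  assert (Hga : g <= beta (mul (inv a) a)).
  { rewrite bmul, binv. apply nat_le_ll; auto. }
  destruct (idem_NF S B beta Hbool g Hgi) as [L [HL EgL]].
  assert (Claim : forall L0, (forall p, In p L0 -> In p L) -> exists F : list S,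
    (forall f, In f F -> nat_le f a /\ nat_le f b) /\
    (forall s (u : X S), val u = mul (inv s) s -> nat_le s a -> (exists p, In p L0 /\ gam p u u) ->
       exists f, In f F /\ nat_le s f)).
  { induction L0 as [|p L0 IH]; intros Hsub.
    - exists []. split. intros ? []. intros s u _ _ [p [[] _]].
    - destruct IH as [F [HF1 HF2]]. intros q Hq; apply Hsub; right; auto.
      assert (HpL : In p L) by (apply Hsub; left; auto).
      destruct (HL p HpL) as [e [ks [He [Hks Ep]]]].
      destruct (classic (PG e ks)) as [HPG|HPG].
      + exists (mul a e :: F). destruct HPG as [He0 HPk].
        set (ue := exist (fun x => x <> zero) e He0 : X S).
        assert (Hpe : gam p ue ue).
        { rewrite Ep. apply gam_bas; auto; simpl; repeat split; auto. }
        assert (Hge : gam g ue ue) by (eapply gam_le; eauto; rewrite EgL; apply goodI_le_jl; auto).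
        assert (Hae : mul (mul (inv a) a) e = e).
        { pose proof (gam_le _ _ ue ue Hga Hge) as H.
          rewrite gam_beta, th_idem_rel in H; eauto. apply H. apply idem_ll. }
        assert (Hae0 : mul a e <> zero) by (apply mul_nonzero; auto).
        set (ua := exist (fun x => x <> zero) (mul a e) Hae0 : X S).
        assert (Hm : gam m ue ua).
        { rewrite Ea. apply gam_mul; auto. exists ue. split; auto. apply gam_beta; auto. simpl.
          unfold th_rel. simpl. split; auto. }
        rewrite Eb in Hm. apply gam_mul in Hm; auto. destruct Hm as [w [Hw1 Hw2]].
        pose proof (gam_idem _ _ _ Hgi Hw1). subst w.
        apply gam_beta in Hw2; auto. destruct Hw2 as [_ Hw2]. simpl in Hw2.
        split.
        * intros f [<-|Hf]; auto. split. apply nat_le_idem_r; auto. rewrite Hw2. apply nat_le_idem_r; auto.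
        * intros s u Hu Hsa [q [[<-|Hq] Hqu]].
          -- exists (mul a e). split. left; auto. rewrite Ep in Hqu. apply gam_bas in Hqu; auto.
             destruct Hqu as [[_ H1] _]. apply nat_le_char in Hsa. exists (val u). split.
             rewrite Hu. apply idem_ll. rewrite Hsa at 1. rewrite <- Hu. rewrite <- mulA, H1. reflexivity.
          -- destruct (HF2 s u Hu Hsa) as [f [Hf Hsf]]. exists q; auto. exists f; split; auto. right; auto.
      + exists F. split; auto. intros s u Hu Hsa [q [[<-|Hq] Hqu]].
        * exfalso. apply HPG. rewrite Ep in Hqu. apply gam_bas in Hqu; auto.
          destruct Hqu as [[_ H1] H2]. eapply PG_of_point; eauto.
        * apply (HF2 s u Hu Hsa). exists q; auto. }
  destruct (Claim L (fun p H => H)) as [F [HF1 HF2]].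
  exists (zero :: F). intros s. split.
  - intros [Hsa Hsb]. destruct (classic (s = zero)) as [Hs0|Hs0].
    + exists zero. split. left; auto. rewrite Hs0. apply nat_le_refl.
    + assert (Hu0 := ll_nonzero s Hs0). set (u := exist (fun x => x <> zero) _ Hu0 : X S).
      assert (Hbs : beta s <= m).
      { apply Hmg. exact I. apply (hom_le _ _ _ Hh); auto. apply (hom_le _ _ _ Hh); auto. }
      assert (Hbg : beta (mul (inv s) s) <= g) by (rewrite bmul, binv; apply nat_le_ll; auto).
      assert (Hgu : gam g u u).
      { eapply gam_le; eauto. apply gam_beta; auto. apply th_idem_rel. apply idem_ll. split; auto.
        simpl. apply idem_ll. }
      rewrite EgL in Hgu. apply (gam_jl L g) in Hgu.
      2: { rewrite EgL. intros q Hq. apply goodI_le_jl; auto. }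
      destruct (HF2 s u eq_refl Hsa Hgu) as [f [Hf Hsf]]. exists f. split; auto. right; auto.
  - intros [f [[<-|Hf] Hsf]].
    + apply S_le_zero in Hsf. rewrite Hsf. split; apply nat_le_zero.
    + destruct (HF1 f Hf). split; eapply nat_le_trans; eauto.
Qed.


Lemma meet_beta : weak_semilattice S -> forall c d, exists m, is_glb_in B anyS (beta c) (beta d) m.
Proof.
  intros Hw c d. destruct (Hw c d) as [F HF].
  assert (HFcd : forall f, In f F -> nat_le f c /\ nat_le f d).
  { intros f Hf. apply HF. exists f. split; auto. apply nat_le_refl. }
  set (phi := jl (map beta F)).
  assert (Hbc : bounded B (map beta F) (beta c)).
  { intros q Hq. apply in_map_iff in Hq. destruct Hq as [f [<- Hf]]. apply (hom_le _ _ _ Hh). apply HFcd; auto. }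
  assert (Hbd : bounded B (map beta F) (beta d)).
  { intros q Hq. apply in_map_iff in Hq. destruct Hq as [f [<- Hf]]. apply (hom_le _ _ _ Hh). apply HFcd; auto. }
  exists phi. split. exact I. split. apply jl_le; auto. split. apply jl_le; auto.
  intros z _ Hzc Hzd.
  set (g := z ^- ** z). assert (Hgi : idem g) by apply idem_ll.
  assert (Ec : z = beta c ** g) by (apply nat_le_char; auto).
  assert (Ed : z = beta d ** g) by (apply nat_le_char; auto).
  assert (Hgc : g <= beta (mul (inv c) c)) by (rewrite bmul, binv; apply nat_le_ll; auto).
  destruct (idem_NF S B beta Hbool g Hgi) as [L [HL EgL]].
  assert (HLb : bounded B L g) by (rewrite EgL; intros q Hq; apply goodI_le_jl; auto).
  rewrite Ec. rewrite EgL at 1. rewrite (jl_mul_l B HB (beta c) L g HLb).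
  apply jl_le. intros q Hq. apply in_map_iff in Hq. destruct Hq as [p [<- Hp]].
  destruct (HL p Hp) as [e [ks [He [Hks Ep]]]].
  destruct (classic (PG e ks)) as [HPG|HPG].
  - destruct HPG as [He0 HPk].
    set (ue := exist (fun x => x <> zero) e He0 : X S).
    assert (Hpe : gam p ue ue) by (rewrite Ep; apply gam_bas; auto; simpl; repeat split; auto).
    assert (Hge : gam g ue ue) by (eapply gam_le; eauto).
    assert (Hce : mul (mul (inv c) c) e = e).
    { pose proof (gam_le _ _ ue ue Hgc Hge) as H.
      rewrite gam_beta, th_idem_rel in H. apply H. apply idem_ll. }
    assert (Hce0 : mul c e <> zero) by (apply mul_nonzero; auto).
    set (uc := exist (fun x => x <> zero) (mul c e) Hce0 : X S).
    assert (Hz : gam z ue uc).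
    { rewrite Ec. apply gam_mul. exists ue. split; auto. apply gam_beta. unfold th_rel. simpl. split; auto. }
    rewrite Ed in Hz. apply gam_mul in Hz. destruct Hz as [w [Hw1 Hw2]].
    pose proof (gam_idem _ _ _ Hgi Hw1). subst w.
    apply gam_beta in Hw2. destruct Hw2 as [_ Hw2]. simpl in Hw2.
    destruct (proj1 (HF (mul c e))) as [f [Hf Hsf]].
    { split. apply nat_le_idem_r; auto. rewrite Hw2. apply nat_le_idem_r; auto. }
    apply nat_le_trans with (beta c ** beta e). apply nat_le_mul_l. rewrite Ep. apply bas_le; auto.
    rewrite <- bmul. apply nat_le_trans with (beta f). apply (hom_le _ _ _ Hh); auto.
    apply le_jl with (beta c); auto. apply in_map; auto.
  - rewrite Ep, bas_zero; auto. rewrite zero_r. apply nat_le_zero.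
Qed.

Lemma meet_beta_r : weak_semilattice S -> forall x c, exists m, is_glb_in B anyS x (beta c) m.
Proof.
  intros Hw x c. destruct (all_Pg S B beta Hbool x) as [L [HL [Hb Ex]]].
  rewrite Ex. apply meet_jl with x; auto. intros p Hp.
  destruct (good_le S B beta Hbool p (HL p Hp)) as [c' Hc'].
  destruct (meet_beta Hw c' c) as [m Hm]. eexists. apply meet_down with (u := beta c'); eauto.
Qed.

Lemma dirB : weak_semilattice S -> wedge_semigroup B.
Proof.
  intros Hw x y. destruct (all_Pg S B beta Hbool y) as [M [HM [Hb Ey]]].
  assert (H : exists m, is_glb_in B anyS (jl M) x m).
  { apply meet_jl with y; auto. intros p Hp.
    destruct (good_le S B beta Hbool p (HM p Hp)) as [c' Hc'].
    destruct (meet_beta_r Hw x c') as [m Hm]. eexists. apply meet_down with (u := beta c'); eauto. apply glb_sym; eauto. }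
  destruct H as [m Hm]. exists m. rewrite Ey. apply glb_sym; auto.
Qed.

End Main.

Theorem proposition2p13 (S B : InvSemigroup0) (beta : S -> B) :
  is_booleanization S B beta ->
  (weak_semilattice S <-> wedge_semigroup B).
Proof.
  intros Hbool. pose proof Hbool as [HB [Hh [Hinj U]]].
  destruct (U (PB S) (th S) (PB_boolean S) (th_hom S)) as [[gam [Hg Eg]] _].
  split; [apply (dirB S B beta Hbool gam Hg Eg) | apply (dirA S B beta Hbool gam Hg Eg)].
Qed.
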